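(* Let $N\ge 1$, $m\ge 2$, and consider $N$ agents with states $x_i(t)\in\mathbb{R}^m$ obeying $\dot x_i(t)=Ax_i(t)+Bu_i(t)$, $i=1,\dots,N$, where $A$ and $B$ are the $m$-th order integrator matrices (see context). Let $\mathcal{G}_{\sigma(t)}$ be a switching family of weighted digraphs on $N$ nodes satisfying the dwell-time assumption, and apply the protocol $$u_i(t)=K_1x_i(t)-\sum_{j\in\mathcal{N}_i(\sigma(t))}\alpha^{ij}_{\sigma(t)}K_2\big(x_i(t)-x_j(t)\big),$$ with $K_1=(0,-a_1,-a_2,\dots,-a_{m-1})\in\mathbb{R}^{1\times m}$ and $K_2=(a_1,a_2,\dots,a_{m-1},1)\in\mathbb{R}^{1\times m}$, where $a_1,\dots,a_{m-1}\in\mathbb{R}$. Suppose all roots of $s^{m-1}+a_{m-1}s^{m-2}+\cdots+a_2s+a_1=0$ have strictly negative real part and $\mathcal{G}_{\sigma(t)}$ is uniformly jointly quasi-strongly connected. Then for every initial condition $x_1(0),\dots,x_N(0)$ there exists $\bar{x}^*\in\mathbb{R}$ such that $\lim_{t\to\infty}x_i(t)=(\bar x^*/a_1,0,\dots,0)^T$ for all $i=1,\dots,N$; in particular the multi-agent system reaches consensus.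
   Context: $A=\begin{pmatrix}0_{m-1}& I_{m-1}\\ 0 & 0_{m-1}^T\end{pmatrix}\in\mathbb{R}^{m\times m}$ (ones on the superdiagonal, zeros elsewhere) and $B=(0,\dots,0,1)^T\in\mathbb{R}^m$, so that $\dot x_{i,1}=x_{i,2},\dots,\dot x_{i,m-1}=x_{i,m},\dot x_{i,m}=u_i$. Graphs: nodes $v_1,\dots,v_N$ (node $v_i$ is agent $i$); an edge $e_{ij}$ from $v_j$ to $v_i$ means agent $i$ receives information from agent $j$; no self-edges. $\mathcal{S}$ is a finite index set of such digraphs; each graph $\mathcal{G}_k$, $k\in\mathcal{S}$, carries fixed weights $\alpha^{ij}_k>0$ for each edge $e_{ij}$ of $\mathcal{G}_k$ (and $\alpha^{ij}_k=0$ if $e_{ij}$ is not an edge). $\mathcal{N}_i(k)=\{j: e_{ij}\in\mathcal{G}_k\}$. $\sigma:[0,\infty)\to\mathcal{S}$ is piecewise constant; dwell-time assumption: the switching instants $t_0<t_1<\cdots$ satisfy $t_{i+1}-t_i\ge\tau_D$ for a constant $\tau_D>0$. A directed path is a sequence of distinct nodes $v_{i_1},\dots,v_{i_p}$ with $e_{i_{s+1}i_s}$ an edge for each $s$. A digraph is quasi-strongly connected if it has a node (root) from which there is a directed path to every other node. The union graph over $[t_1,t_2)$ has node set $\{v_1,\dots,v_N\}$ and edge set $\bigcup_{t\in[t_1,t_2)}\mathcal{E}(\mathcal{G}_{\sigma(t)})$. $\mathcal{G}_{\sigma(t)}$ is uniformly jointly quasi-strongly connected if there is $T>0$ such that the union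 graph over $[t,t+T)$ is quasi-strongly connected for every $t\ge 0$. The system reaches consensus if there exists $x^*\in\mathbb{R}^m$ with $\lim_{t\to\infty}x_i(t)=x^*$ for all $i$. *)

(* Defs.v *)
From Stdlib Require Import Reals Lra Lia List.
Import ListNotations.
Open Scope R_scope.

Fixpoint rsum (n : nat) (f : nat -> R) : R :=
  match n with
  | O => 0
  | S k => rsum k f + f k
  end.

(** Minimal complex arithmetic on pairs (re, im). *)
Definition cadd (z w : R * R) : R * R := (fst z + fst w, snd z + snd w).
Definition cmul (z w : R * R) : R * R :=
  (fst z * fst w - snd z * snd w, fst z * snd w + snd z * fst w).
Definition cofr (r : R) : R * R := (r, 0).
Fixpoint cpow (z : R * R) (n : nat) : R * R :=
  match n with
  | O => (1, 0)
  | S k => cmul z (cpow z k)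
  end.

(** Value at complex s of  s^(m-1) + a_(m-1) s^(m-2) + ... + a_2 s + a_1
    (coefficients a 1, ..., a (m-1); a k multiplies s^(k-1)). *)
Definition charpoly (m : nat) (a : nat -> R) (s : R * R) : R * R :=
  cadd (cpow s (m - 1))
       (fold_right cadd (0, 0)
          (map (fun k => cmul (cofr (a k)) (cpow s (k - 1))) (seq 1 (m - 1)))).

Definition hurwitz (m : nat) (a : nat -> R) : Prop :=
  forall s : R * R, charpoly m a s = (0, 0) -> fst s < 0.

(** Gains, components indexed 0..m-1 (component c is x_{i,c+1} of the paper).
    K1 = (0, -a_1, ..., -a_(m-1)),  K2 = (a_1, ..., a_(m-1), 1). *)
Definition K1 (a : nat -> R) (c : nat) : R :=
  match c with O => 0 | _ => - a c end.
Definition K2 (m : nat) (a : nat -> R) (c : nat) : R :=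
  if Nat.eqb c (m - 1) then 1 else a (S c).

(** Protocol:  u_i(t) = K1 x_i(t) - sum_j alpha^{ij}_{sigma(t)} K2 (x_i(t) - x_j(t)).
    x i t c = component c of agent i's state at time t; alpha k i j = weight of
    edge e_ij (from v_j to v_i) in graph k (0 if not an edge). *)
Definition protocol (N m : nat) (a : nat -> R) (alpha : nat -> nat -> nat -> R)
  (sigma : R -> nat) (x : nat -> R -> nat -> R) (i : nat) (t : R) : R :=
  rsum m (fun c => K1 a c * x i t c)
  - rsum N (fun j => alpha (sigma t) i j *
                     rsum m (fun c => K2 m a c * (x i t c - x j t c))).

Definition union_edge (alpha : nat -> nat -> nat -> R) (sigma : R -> nat)
  (t1 t2 : R) (i j : nat) : Prop :=
  exists s, t1 <= s < t2 /\ alpha (sigma s) i j > 0.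

(** [chain E p]: for consecutive nodes v_a, v_b of p, e_{ba} is an edge
    (E b a means: edge from v_a to v_b). *)
Fixpoint chain (E : nat -> nat -> Prop) (p : list nat) : Prop :=
  match p with
  | a :: ((b :: _) as rest) => E b a /\ chain E rest
  | _ => True
  end.

Definition dpath (N : nat) (E : nat -> nat -> Prop) (r v : nat) : Prop :=
  exists p : list nat,
    NoDup p /\ Forall (fun k => (k < N)%nat) p /\
    head p = Some r /\ last p r = v /\ chain E p.

Definition quasi_strongly_connected (N : nat) (E : nat -> nat -> Prop) : Prop :=
  exists r, (r < N)%nat /\ forall v, (v < N)%nat -> dpath N E r v.

Definition ujqsc (N : nat) (alpha : nat -> nat -> nat -> R) (sigma : R -> nat) : Prop :=
  exists T, T > 0 /\
    forall t, t >= 0 -> quasi_strongly_connected N (union_edge alpha sigma t (t + T)).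

Definition dwell_switching (sigma : R -> nat) (ts : nat -> R) (tauD : R) : Prop :=
  tauD > 0 /\ ts O = 0 /\
  (forall n, ts n + tauD <= ts (S n)) /\
  (forall n t, ts n <= t < ts (S n) -> sigma t = sigma (ts n)).

Definition cv_infty_to (f : R -> R) (L : R) : Prop :=
  forall eps, eps > 0 -> exists T, forall t, t >= T -> Rabs (f t - L) < eps.

(* Main.v *)
Require Import Defs.
From Stdlib Require Import Reals List.
From Stdlib Require Import Lra Lia ZArith Classical.
From HB Require structures.
From mathcomp Require all_boot all_order all_algebra.
From mathcomp Require Rstruct complex.
Open Scope R_scope.

Definition dw (ts : nat -> R) (tauD : R) : Prop :=
  tauD > 0 /\ ts O = 0 /\ (forall n, ts n + tauD <= ts (S n)).

Definition inpiece (ts : nat -> R) (t : R) : Prop := exists n, ts n < t < ts (S n).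

Lemma dw_lin ts tauD : dw ts tauD -> forall n, ts n >= INR n * tauD.
Proof.
  intros [Ht [H0 Hs]] n; induction n as [|n IH].
  - rewrite H0; simpl; lra.
  - rewrite S_INR. specialize (Hs n). lra.
Qed.

Lemma dw_mono ts tauD : dw ts tauD -> forall n k, (n <= k)%nat -> ts n <= ts k.
Proof.
  intros Hd n k Hnk; induction Hnk as [|k Hk IH]; [lra|].
  destruct Hd as [Ht [H0 Hs]]; specialize (Hs k); lra.
Qed.

Lemma dw_unb ts tauD : dw ts tauD -> forall s, exists n, s < ts n.
Proof.
  intros Hd s. destruct (Hd) as [Ht _].
  destruct (archimed (s / tauD)) as [Ha _].
  assert (Hz : exists n : nat, s / tauD < INR n).
  { destruct (Rle_or_lt (IZR (up (s / tauD))) 0) as [Hle|Hlt].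
    - exists O; simpl; lra.
    - exists (Z.to_nat (up (s / tauD))). rewrite INR_IZR_INZ.
      rewrite Z2Nat.id; [lra|]. apply le_IZR. lra. }
  destruct Hz as [n Hn]. exists n. pose proof (dw_lin ts tauD Hd n).
  apply Rmult_lt_compat_r with (r := tauD) in Hn; [|lra].
  unfold Rdiv in Hn. rewrite Rmult_assoc, Rinv_l in Hn; lra.
Qed.

Lemma dw_find ts tauD : dw ts tauD -> forall s, 0 <= s -> exists n, ts n <= s < ts (S n).
Proof.
  intros Hd s Hs. destruct (dw_unb ts tauD Hd s) as [N HN].
  induction N as [|N IH].
  - destruct Hd as [_ [H0 _]]. lra.
  - destruct (Rlt_or_le s (ts N)) as [Hl|Hl]; [apply IH; exact Hl|].
    exists N; lra.
Qed.

Lemma dw_find' ts tauD : dw ts tauD -> forall s, 0 < s -> exists n, ts n < s <= ts (S n).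
Proof.
  intros Hd s Hs. destruct (dw_find ts tauD Hd s) as [n Hn]; [lra|].
  destruct (Rlt_or_le (ts n) s) as [Hl|Hl].
  - exists n; lra.
  - destruct n as [|n].
    + destruct Hd as [_ [H0 _]]; lra.
    + exists n. destruct Hd as [Ht [_ Hsn]]. specialize (Hsn n). lra.
Qed.

Lemma mvt_lim (f f' : R -> R) (a b : R) : a < b ->
  (forall c, a < c < b -> derivable_pt_lim f c (f' c)) ->
  (forall c, a <= c <= b -> continuity_pt f c) ->
  exists c, a < c < b /\ f b - f a = f' c * (b - a).
Proof.
  intros Hab Hd Hc.
  assert (pr1 : forall c, a < c < b -> derivable_pt f c).
  { intros c Hc'. exists (f' c). apply Hd; exact Hc'. }
  assert (pr2 : forall c, a < c < b -> derivable_pt id c).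
  { intros c _. apply derivable_pt_id. }
  destruct (MVT f id a b pr1 pr2 Hab Hc (fun c _ => derivable_continuous_pt _ _ (derivable_pt_id c)))
    as [c [P HP]].
  exists c; split; [exact P|].
  rewrite (derive_pt_eq_0 _ _ _ (pr1 c P) (Hd c P)) in HP.
  rewrite (derive_pt_eq_0 _ _ _ (pr2 c P) (derivable_pt_lim_id c)) in HP.
  unfold id in HP. lra.
Qed.

Lemma mono_piece ts tauD (f f' : R -> R) lo hi : dw ts tauD -> 0 <= lo ->
  (forall t, lo <= t <= hi -> continuity_pt f t) ->
  (forall t, inpiece ts t -> lo < t < hi -> derivable_pt_lim f t (f' t)) ->
  (forall t, inpiece ts t -> lo < t < hi -> 0 <= f' t) ->
  forall a b, lo <= a -> a <= b -> b <= hi -> f a <= f b.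
Proof.
  intros Hd Hlo Hc Hder Hpos.
  assert (Hloc : forall n a b, ts n <= a -> a <= b -> b <= ts (S n) -> lo <= a -> b <= hi -> f a <= f b).
  { intros n a b H1 H2 H3 H4 H5. destruct (Req_dec a b) as [E|E]; [subst; lra|].
    destruct (mvt_lim f f' a b) as [c [Hc1 Hc2]]; [lra| | |].
    - intros c Hc'. apply Hder; [exists n; lra| lra].
    - intros c Hc'. apply Hc; lra.
    - assert (0 <= f' c) by (apply Hpos; [exists n; lra| lra]).
      assert (0 <= f' c * (b - a)) by (apply Rmult_le_pos; lra). lra. }
  assert (Hk : forall k a b, lo <= a -> a <= b -> b <= hi -> b <= ts k -> f a <= f b).
  { induction k as [|k IH]; intros a b H1 H2 H3 H4.
    - destruct Hd as [_ [H0 _]]. assert (a = b) by lra. subst; lra.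
    - destruct (Rle_or_lt b (ts k)) as [Hb|Hb]; [apply IH; lra|].
      destruct (Rle_or_lt (ts k) a) as [Ha|Ha].
      + apply (Hloc k); lra.
      + apply Rle_trans with (f (ts k)); [apply IH; lra|].
        apply (Hloc k); lra. }
  intros a b H1 H2 H3. destruct (dw_unb ts tauD Hd b) as [k Hk'].
  apply (Hk k); lra.
Qed.

Lemma cont_eps f t0 : continuity_pt f t0 -> forall eps, 0 < eps ->
  exists eta, 0 < eta /\ forall u, Rabs (u - t0) < eta -> Rabs (f u - f t0) < eps.
Proof.
  intros Hc eps He. destruct (Hc eps He) as [al [Hal H]].
  exists al; split; [lra|]. intros u Hu.
  destruct (Req_dec u t0) as [E|E].
  - subst. rewrite Rminus_diag, Rabs_R0; lra.
  - apply (H u). split; [split; [exact I| auto]| exact Hu].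
Qed.

Lemma fin_neg N (g : nat -> R -> R) t0 :
  (forall i, (i < N)%nat -> continuity_pt (g i) t0) ->
  (forall i, (i < N)%nat -> g i t0 < 0) ->
  exists eta, 0 < eta /\ forall u, Rabs (u - t0) < eta -> forall i, (i < N)%nat -> g i u < 0.
Proof.
  induction N as [|N IH]; intros Hc Hn.
  - exists 1; split; [lra|]. intros; lia.
  - destruct IH as [e1 [He1 H1]]; [intros; apply Hc; lia| intros; apply Hn; lia|].
    destruct (cont_eps (g N) t0 (Hc N (Nat.lt_succ_diag_r N)) (- g N t0)) as [e2 [He2 H2]].
    { specialize (Hn N (Nat.lt_succ_diag_r N)); lra. }
    exists (Rmin e1 e2); split; [apply Rmin_pos; lra|].
    intros u Hu i Hi. destruct (Nat.eq_dec i N) as [->|Hne].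
    + assert (Rabs (u - t0) < e2) by (pose proof (Rmin_r e1 e2); lra).
      specialize (H2 u H). apply Rabs_def2 in H2. lra.
    + apply H1; [pose proof (Rmin_l e1 e2); lra| lia].
Qed.

Lemma barrier ts tauD N (g dg : nat -> R -> R) t0 eps K :
  dw ts tauD -> 0 <= t0 -> 0 < eps -> 0 <= K ->
  (forall i t, (i < N)%nat -> continuity_pt (g i) t) ->
  (forall i, (i < N)%nat -> g i t0 < 0) ->
  (forall i t, (i < N)%nat -> inpiece ts t -> derivable_pt_lim (g i) t (dg i t)) ->
  (forall i t, (i < N)%nat -> inpiece ts t -> t0 < t ->
      (forall j, (j < N)%nat -> g j t <= 0) -> dg i t <= - eps + K * Rabs (g i t)) ->
  forall t, t0 <= t -> forall i, (i < N)%nat -> g i t < 0.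
Proof.
  intros Hd Ht0 He HK Hc H0 Hder Hdg t1 Ht1 i1 Hi1.
  destruct (Rlt_dec (g i1 t1) 0) as [Hok|Hbad]; [exact Hok|exfalso].
  apply Rnot_lt_le in Hbad.
  set (E := fun u => t0 <= u <= t1 /\ forall v, t0 <= v <= u -> forall j, (j < N)%nat -> g j v < 0).
  assert (HEb : bound E) by (exists t1; intros u [Hu _]; lra).
  assert (HE0 : exists u, E u).
  { exists t0. split; [lra|]. intros v Hv j Hj. replace v with t0 by lra. apply H0; exact Hj. }
  destruct (completeness E HEb HE0) as [s [Hub Hlub]].
  assert (Hst0 : t0 <= s) by (apply Hub; destruct HE0 as [u Hu]; split; [lra|]; intros v Hv j Hj;
     replace v with t0 by lra; apply H0; exact Hj).
  assert (Hst1 : s <= t1) by (apply Hlub; intros u [Hu _]; lra).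
  assert (Ha : forall v, t0 <= v < s -> forall j, (j < N)%nat -> g j v < 0).
  { intros v Hv j Hj. destruct (Rlt_dec (g j v) 0) as [Hl|Hl]; [exact Hl|exfalso].
    assert (s <= v); [|lra]. apply Hlub. intros u [Hu1 Hu2].
    destruct (Rle_or_lt u v) as [Huv|Huv]; [exact Huv|].
    exfalso. apply Hl. apply Hu2; [lra| exact Hj]. }
  assert (Hc' : exists j, (j < N)%nat /\ 0 <= g j s).
  { destruct (classic (exists j, (j < N)%nat /\ 0 <= g j s)) as [Hx|Hx]; [exact Hx|exfalso].
    assert (Hall : forall j, (j < N)%nat -> g j s < 0).
    { intros j Hj. destruct (Rlt_dec (g j s) 0) as [Hl|Hl]; [exact Hl|].
      exfalso; apply Hx; exists j; split; [exact Hj| lra]. }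
    destruct (fin_neg N g s (fun i Hi => Hc i s Hi) Hall) as [eta [Heta Hn]].
    set (u := Rmin (s + eta / 2) t1).
    assert (Hu : E u).
    { split; [split; [unfold u; apply Rmin_glb; lra| apply Rmin_r]|].
      intros v Hv j Hj. destruct (Rlt_or_le v s) as [Hvs|Hvs].
      - apply Ha; [lra| exact Hj].
      - apply Hn; [|exact Hj]. pose proof (Rmin_l (s + eta/2) t1).
        unfold u in Hv. rewrite Rabs_right; lra. }
    specialize (Hub u Hu). unfold u in Hub.
    destruct (Rle_dec (s + eta / 2) t1) as [Hm|Hm];
      [rewrite Rmin_left in Hub by lra; lra| rewrite Rmin_right in Hub by lra].
    assert (s = t1) by lra. subst s. specialize (Hall i1 Hi1). lra. }
  destruct Hc' as [j [Hj Hgj]].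
  assert (Hst : t0 < s).
  { destruct (Rle_lt_or_eq_dec t0 s Hst0) as [Hl|Hl]; [exact Hl|].
    subst s. specialize (H0 j Hj). lra. }
  destruct (dw_find' ts tauD Hd s) as [n Hn]; [lra|].
  set (ep := eps / (2 * (K + 1))).
  assert (Hep : 0 < ep) by (unfold ep; apply Rdiv_lt_0_compat; lra).
  destruct (cont_eps (g j) s (Hc j s Hj) ep Hep) as [eta [Heta Hgc]].
  set (lo := Rmax (Rmax (ts n) t0) (s - eta / 2)).
  assert (Hlo : lo < s).
  { unfold lo. apply Rmax_lub_lt; [apply Rmax_lub_lt|]; lra. }
  assert (Hlo1 : ts n <= lo /\ t0 <= lo /\ s - eta / 2 <= lo).
  { unfold lo. pose proof (Rmax_l (Rmax (ts n) t0) (s - eta / 2)).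
    pose proof (Rmax_r (Rmax (ts n) t0) (s - eta / 2)).
    pose proof (Rmax_l (ts n) t0). pose proof (Rmax_r (ts n) t0). lra. }
  set (u0 := (lo + s) / 2).
  destruct (mvt_lim (g j) (dg j) u0 s) as [c [Hcc Hmvt]].
  - unfold u0; lra.
  - intros c Hcc. apply Hder; [exact Hj| exists n; unfold u0 in Hcc; lra].
  - intros c _. apply Hc; exact Hj.
  - assert (Hgc0 : g j c < 0) by (apply Ha; [unfold u0 in Hcc; lra| exact Hj]).
    assert (Habs : Rabs (g j c) < ep).
    { specialize (Hgc c). assert (Rabs (c - s) < eta) by (rewrite Rabs_left; unfold u0 in Hcc; lra).
      specialize (Hgc H). apply Rabs_def2 in Hgc. rewrite Rabs_left; lra. }
    assert (Hdgc : dg j c <= - eps + K * Rabs (g j c)).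
    { apply Hdg; [exact Hj| exists n; unfold u0 in Hcc; lra| unfold u0 in Hcc; lra|].
      intros k Hk. left. apply Ha; [unfold u0 in Hcc; lra| exact Hk]. }
    assert (HKep : K * Rabs (g j c) <= eps / 2).
    { apply Rle_trans with (K * ep).
      - apply Rmult_le_compat_l; [exact HK| lra].
      - unfold ep. apply Rle_trans with ((K + 1) * (eps / (2 * (K + 1)))).
        + apply Rmult_le_compat_r; [left; apply Rdiv_lt_0_compat; lra| lra].
        + right. field. lra. }
    assert (Hneg : dg j c * (s - u0) < 0).
    { assert (0 < s - u0) by (unfold u0; lra).
      assert (dg j c < 0) by lra.
      replace (dg j c * (s - u0)) with (- ((- dg j c) * (s - u0))) by ring.
      assert (0 < (- dg j c) * (s - u0)) by (apply Rmult_lt_0_compat; lra). lra. }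
    assert (g j u0 < 0) by (apply Ha; [unfold u0; lra| exact Hj]).
    lra.
Qed.

Lemma rsum_ext n f g : (forall i, (i < n)%nat -> f i = g i) -> rsum n f = rsum n g.
Proof. induction n; intros H; simpl; [reflexivity|]. rewrite IHn, H; [reflexivity|lia|intros; apply H; lia]. Qed.
Lemma rsum_le n f g : (forall i, (i < n)%nat -> f i <= g i) -> rsum n f <= rsum n g.
Proof. induction n; intros H; simpl; [lra|]. pose proof (H n (Nat.lt_succ_diag_r n)). assert (rsum n f <= rsum n g) by (apply IHn; intros; apply H; lia). lra. Qed.
Lemma rsum_plus n f g : rsum n (fun i => f i + g i) = rsum n f + rsum n g.
Proof. induction n; simpl; [ring|]. rewrite IHn; ring. Qed.
Lemma rsum_scal n c f : rsum n (fun i => c * f i) = c * rsum n f.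
Proof. induction n; simpl; [ring|]. rewrite IHn; ring. Qed.
Lemma rsum_opp n f : rsum n (fun i => - f i) = - rsum n f.
Proof. induction n; simpl; [ring|]. rewrite IHn; ring. Qed.
Lemma rsum_const n c : rsum n (fun _ => c) = INR n * c.
Proof. induction n; simpl rsum; [simpl; ring|]. rewrite IHn, S_INR; ring. Qed.
Lemma rsum_nonneg n f : (forall i, (i < n)%nat -> 0 <= f i) -> 0 <= rsum n f.
Proof. intros H. rewrite <- (Rmult_0_r (INR n)), <- rsum_const. apply rsum_le; exact H. Qed.
Lemma rsum_ge_term n f j : (forall i, (i < n)%nat -> 0 <= f i) -> (j < n)%nat -> f j <= rsum n f.
Proof.
  induction n; intros H Hj; [lia|]. simpl.
  destruct (Nat.eq_dec j n) as [->|Hne].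
  - assert (0 <= rsum n f) by (apply rsum_nonneg; intros; apply H; lia). lra.
  - assert (f j <= rsum n f) by (apply IHn; [intros; apply H; lia| lia]).
    pose proof (H n (Nat.lt_succ_diag_r n)). lra.
Qed.
Lemma rsum_abs_bound n f : forall i, (i < n)%nat -> Rabs (f i) <= rsum n (fun j => Rabs (f j)).
Proof. intros i Hi. apply (rsum_ge_term n (fun j => Rabs (f j))); [intros; apply Rabs_pos| exact Hi]. Qed.
Lemma rsum_deriv n (F F' : nat -> R -> R) t :
  (forall i, (i < n)%nat -> derivable_pt_lim (F i) t (F' i t)) ->
  derivable_pt_lim (fun s => rsum n (fun i => F i s)) t (rsum n (fun i => F' i t)).
Proof.
  induction n; intros H; simpl.
  - apply derivable_pt_lim_const.
  - apply (derivable_pt_lim_plus (fun s => rsum n (fun i => F i s)) (F n)).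
    + apply IHn; intros; apply H; lia.
    + apply H; lia.
Qed.
Lemma rsum_cont n (F : nat -> R -> R) t :
  (forall i, (i < n)%nat -> continuity_pt (F i) t) ->
  continuity_pt (fun s => rsum n (fun i => F i s)) t.
Proof.
  induction n; intros H; simpl.
  - apply continuity_pt_const. intros a b; reflexivity.
  - apply (continuity_pt_plus (fun s => rsum n (fun i => F i s)) (F n)).
    + apply IHn; intros; apply H; lia.
    + apply H; lia.
Qed.

Lemma dlim_scal c f l t : derivable_pt_lim f t l -> derivable_pt_lim (fun u => c * f u) t (c * l).
Proof. intros H. exact (derivable_pt_lim_scal f c t l H). Qed.

Lemma expw_deriv K (f : R -> R) f't t : derivable_pt_lim f t f't ->
  derivable_pt_lim (fun u => exp (K * u) * f u) t (exp (K * t) * (f't + K * f t)).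
Proof.
  intros Hf.
  assert (He : derivable_pt_lim (fun u => exp (K * u)) t (K * exp (K * t))).
  { assert (H1 : derivable_pt_lim (fun u => K * u) t K).
    { pose proof (dlim_scal K (fun u => u) 1 t (derivable_pt_lim_id t)) as H; rewrite Rmult_1_r in H; exact H. }
    pose proof (derivable_pt_lim_comp (fun u => K * u) exp t K (exp (K * t)) H1 (derivable_pt_lim_exp _)) as H2.
    unfold comp in H2. replace (K * exp (K * t)) with (exp (K * t) * K) by ring. exact H2. }
  pose proof (derivable_pt_lim_mult _ _ _ _ _ He Hf) as H. unfold mult_fct in H.
  replace (exp (K * t) * (f't + K * f t)) with (K * exp (K * t) * f t + exp (K * t) * f't) by ring.
  exact H.
Qed.
Lemma expw_cont K (f : R -> R) t : continuity_pt f t -> continuity_pt (fun u => exp (K * u) * f u) t.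
Proof.
  intros Hf. apply (continuity_pt_mult (fun u => exp (K * u)) f); [|exact Hf].
  apply (continuity_pt_comp (fun u => K * u) exp).
  - apply continuity_pt_mult; [apply continuity_pt_const; intros a b; reflexivity| apply derivable_continuous_pt, derivable_pt_id].
  - apply derivable_continuous_pt, derivable_pt_exp.
Qed.

Definition cons_dyn ts N (w : R -> nat -> nat -> R) (z : nat -> R -> R) : Prop :=
  (forall i t, (i < N)%nat -> continuity_pt (z i) t) /\
  (forall i t, (i < N)%nat -> inpiece ts t ->
     derivable_pt_lim (z i) t (rsum N (fun j => w t i j * (z j t - z i t)))).

Definition wbound N (w : R -> nat -> nat -> R) W : Prop :=
  forall t i j, (i < N)%nat -> (j < N)%nat -> 0 <= w t i j <= W.

Lemma wsum_bound N w W t i : wbound N w W -> (i < N)%nat -> 0 <= rsum N (fun j => w t i j) <= INR N * W.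
Proof.
  intros Hw Hi. split.
  - apply rsum_nonneg; intros; apply Hw; lia.
  - rewrite <- rsum_const. apply rsum_le; intros; apply Hw; lia.
Qed.

Lemma maxp ts tauD N w W z : dw ts tauD -> wbound N w W -> cons_dyn ts N w z ->
  forall t0 M, 0 <= t0 -> (forall i, (i < N)%nat -> z i t0 <= M) ->
  forall t, t0 <= t -> forall i, (i < N)%nat -> z i t <= M.
Proof.
  intros Hd Hw [Hc Hz] t0 M Ht0 HM t Ht i Hi.
  destruct (Rle_dec (z i t) M) as [Hok|Hbad]; [exact Hok|exfalso].
  apply Rnot_le_lt in Hbad.
  set (eps := (z i t - M) / (2 * (1 + (t - t0)))).
  assert (Heps : 0 < eps) by (unfold eps; apply Rdiv_lt_0_compat; lra).
  assert (HW : 0 <= W).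
  { destruct N; [lia|]. destruct (Hw 0 O O) as [H1 H2]; lia||lra. }
  assert (Hb := barrier ts tauD N (fun k u => z k u - M - eps - eps * (u - t0))
     (fun k u => rsum N (fun j => w u k j * (z j u - z k u)) - eps) t0 eps (INR N * W) Hd Ht0 Heps).
  assert (HK : 0 <= INR N * W) by (apply Rmult_le_pos; [apply pos_INR| exact HW]).
  specialize (Hb HK).
  assert (Hg : z i t - M - eps - eps * (t - t0) < 0).
  { apply Hb; [ | | | | exact Ht| exact Hi].
    - intros k u Hk. apply continuity_pt_minus; [apply continuity_pt_minus; [apply continuity_pt_minus; [apply Hc; exact Hk|]|]|].
      + apply continuity_pt_const; intros a b; reflexivity.
      + apply continuity_pt_const; intros a b; reflexivity.
      + apply continuity_pt_mult; [apply continuity_pt_const; intros a b; reflexivity|].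
        apply continuity_pt_minus; [apply derivable_continuous_pt, derivable_pt_id| apply continuity_pt_const; intros a b; reflexivity].
    - intros k Hk. specialize (HM k Hk). replace (t0 - t0) with 0 by ring. lra.
    - intros k u Hk Hp.
      replace (rsum N (fun j => w u k j * (z j u - z k u)) - eps)
        with (rsum N (fun j => w u k j * (z j u - z k u)) - 0 - 0 - eps * (1 - 0)) by ring.
      apply derivable_pt_lim_minus; [apply derivable_pt_lim_minus; [apply derivable_pt_lim_minus|]|].
      + apply Hz; assumption.
      + apply derivable_pt_lim_const.
      + apply derivable_pt_lim_const.
      + apply dlim_scal. apply (derivable_pt_lim_minus (fun u => u) (fun _ => t0)); [apply derivable_pt_lim_id| apply derivable_pt_lim_const].
    - intros k u Hk Hp Hu Hall.
      set (gk := z k u - M - eps - eps * (u - t0)).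
      assert (Hgk : gk <= 0) by (apply Hall; exact Hk).
      assert (Hs : rsum N (fun j => w u k j * (z j u - z k u)) <= rsum N (fun j => w u k j * (- gk))).
      { apply rsum_le. intros j Hj. apply Rmult_le_compat_l; [apply Hw; assumption|].
        specialize (Hall j Hj). unfold gk. lra. }
      rewrite (rsum_ext N (fun j => w u k j * (- gk)) (fun j => (- gk) * w u k j)) in Hs by (intros; ring).
      rewrite rsum_scal in Hs. change (rsum N (w u k)) with (rsum N (fun j => w u k j)) in Hs.
      destruct (wsum_bound N w W u k Hw Hk) as [_ Hb2].
      rewrite Rabs_left1 by exact Hgk.
      assert (- gk * rsum N (fun j => w u k j) <= INR N * W * - gk)
        by (rewrite Rmult_comm; apply Rmult_le_compat_r; lra).
      lra. }
  assert (eps * (1 + (t - t0)) = (z i t - M) / 2).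
  { unfold eps. field. lra. }
  lra.
Qed.

Lemma kineq N w W y t i jj : wbound N w W -> (i < N)%nat -> (jj < N)%nat ->
  (forall j, (j < N)%nat -> 0 <= y j) ->
  w t i jj * y jj <= rsum N (fun j => w t i j * (y j - y i)) + INR N * W * y i.
Proof.
  intros Hw Hi Hjj Hy.
  rewrite (rsum_ext N (fun j => w t i j * (y j - y i)) (fun j => w t i j * y j + (- y i) * w t i j))
    by (intros; ring).
  rewrite rsum_plus, rsum_scal.
  assert (H1 : w t i jj * y jj <= rsum N (fun j => w t i j * y j)).
  { apply (rsum_ge_term N (fun j => w t i j * y j)); [|exact Hjj].
    intros k Hk. apply Rmult_le_pos; [apply Hw; assumption| apply Hy; exact Hk]. }
  destruct (wsum_bound N w W t i Hw Hi) as [_ H2].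
  change (rsum N (w t i)) with (rsum N (fun j => w t i j)).
  assert (y i * rsum N (fun j => w t i j) <= y i * (INR N * W))
    by (apply Rmult_le_compat_l; [apply Hy; exact Hi| exact H2]).
  lra.
Qed.

Lemma cont_lin a b : forall t, continuity_pt (fun u => a * u + b) t.
Proof.
  intros t. apply continuity_pt_plus.
  - apply continuity_pt_mult; [apply continuity_pt_const; intros p q; reflexivity| apply derivable_continuous_pt, derivable_pt_id].
  - apply continuity_pt_const; intros p q; reflexivity.
Qed.

Lemma decay ts tauD N w W y t0 : dw ts tauD -> wbound N w W -> cons_dyn ts N w y -> 0 <= t0 ->
  (forall t i, t0 <= t -> (i < N)%nat -> 0 <= y i t) ->
  forall i s t, (i < N)%nat -> t0 <= s -> s <= t ->
    exp (- (INR N * W) * (t - s)) * y i s <= y i t.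
Proof.
  intros Hd Hw [Hc Hy] Ht0 Hnn i s t Hi Hs Hst.
  set (K := INR N * W).
  assert (Hm := mono_piece ts tauD (fun u => exp (K * u) * y i u)
    (fun u => exp (K * u) * (rsum N (fun j => w u i j * (y j u - y i u)) + K * y i u)) s t Hd).
  assert (Hle : exp (K * s) * y i s <= exp (K * t) * y i t).
  { apply Hm; try lra.
    - intros u _. apply expw_cont, Hc; exact Hi.
    - intros u Hp _. apply expw_deriv, Hy; assumption.
    - intros u Hp Hu. apply Rmult_le_pos; [left; apply exp_pos|].
      pose proof (kineq N w W (fun j => y j u) u i i Hw Hi Hi) as Hk.
      assert (0 <= w u i i * y i u) by (apply Rmult_le_pos; [apply Hw; assumption| apply Hnn; [lra| exact Hi]]).
      assert (Hk' : w u i i * y i u <= rsum N (fun j => w u i j * (y j u - y i u)) + K * y i u)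
        by (apply Hk; intros j Hj; apply Hnn; [lra| exact Hj]).
      lra. }
  replace (exp (- K * (t - s))) with (exp (K * s) * exp (- (K * t))).
  - replace (y i t) with (exp (- (K * t)) * (exp (K * t) * y i t)).
    + rewrite (Rmult_comm (exp (K * s))), Rmult_assoc. apply Rmult_le_compat_l; [left; apply exp_pos| exact Hle].
    + rewrite <- Rmult_assoc, <- exp_plus. replace (- (K * t) + K * t) with 0 by ring. rewrite exp_0; ring.
  - rewrite <- exp_plus. f_equal. ring.
Qed.

Lemma growth ts tauD N w W y t0 : dw ts tauD -> wbound N w W -> cons_dyn ts N w y -> 0 <= t0 ->
  (forall t i, t0 <= t -> (i < N)%nat -> 0 <= y i t) ->
  forall i j a tau delta c, (i < N)%nat -> (j < N)%nat -> t0 <= a -> 0 < tau -> 0 <= delta -> 0 <= c ->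
  (forall u, a < u < a + tau -> delta <= w u i j) ->
  (forall u, a <= u <= a + tau -> c <= y j u) ->
  exp (- (INR N * W) * tau) * (delta * c * tau) <= y i (a + tau).
Proof.
  intros Hd Hw [Hc Hy] Ht0 Hnn i j a tau delta c Hi Hj Ha Htau Hdel Hcc Hwd Hyc.
  set (K := INR N * W).
  assert (HK : 0 <= K).
  { unfold K. apply Rmult_le_pos; [apply pos_INR|]. destruct (Hw 0 i i Hi Hi); lra. }
  set (C := exp (K * a) * delta * c).
  assert (Hm := mono_piece ts tauD (fun u => exp (K * u) * y i u + (- C) * u)
    (fun u => exp (K * u) * (rsum N (fun v => w u i v * (y v u - y i u)) + K * y i u) + (- C)) a (a + tau) Hd).
  assert (Hle : exp (K * a) * y i a + (- C) * a <= exp (K * (a + tau)) * y i (a + tau) + (- C) * (a + tau)).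
  { apply Hm; try lra.
    - intros u _. apply continuity_pt_plus; [apply expw_cont, Hc; exact Hi|].
      apply continuity_pt_mult; [apply continuity_pt_const; intros p q; reflexivity| apply derivable_continuous_pt, derivable_pt_id].
    - intros u Hp _. apply derivable_pt_lim_plus; [apply expw_deriv, Hy; assumption|].
      pose proof (dlim_scal (- C) (fun u => u) 1 u (derivable_pt_lim_id u)) as H. rewrite Rmult_1_r in H; exact H.
    - intros u Hp Hu.
      assert (Hk : w u i j * y j u <= rsum N (fun v => w u i v * (y v u - y i u)) + K * y i u)
        by (apply (kineq N w W (fun v => y v u) u i j Hw Hi Hj); intros v Hv; apply Hnn; [lra| exact Hv]).
      assert (H1 : delta * c <= w u i j * y j u).
      { apply Rmult_le_compat; try lra. apply Hwd; lra. apply Hyc; lra. }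
      assert (H2 : exp (K * a) <= exp (K * u)).
      { destruct (Req_dec K 0) as [E|E]; [rewrite E, !Rmult_0_l; lra|].
        left; apply exp_increasing. apply Rmult_lt_compat_l; lra. }
      assert (H3 : exp (K * a) * (delta * c) <= exp (K * u) * (w u i j * y j u)).
      { apply Rmult_le_compat; try lra. left; apply exp_pos. apply Rmult_le_pos; lra. }
      assert (H4 : exp (K * u) * (w u i j * y j u) <= exp (K * u) * (rsum N (fun v => w u i v * (y v u - y i u)) + K * y i u))
        by (apply Rmult_le_compat_l; [left; apply exp_pos| exact Hk]).
      unfold C. lra. }
  assert (Hya : 0 <= y i a) by (apply Hnn; [lra| exact Hi]).
  assert (Hmain : exp (K * a) * (delta * c * tau) <= exp (K * (a + tau)) * y i (a + tau)).
  { assert (0 <= exp (K * a) * y i a) by (apply Rmult_le_pos; [left; apply exp_pos| exact Hya]).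
    unfold C in Hle. lra. }
  replace (exp (- K * tau)) with (exp (K * a) * exp (- (K * (a + tau)))).
  - replace (y i (a + tau)) with (exp (- (K * (a + tau))) * (exp (K * (a + tau)) * y i (a + tau))).
    + rewrite (Rmult_comm (exp (K * a))), Rmult_assoc. apply Rmult_le_compat_l; [left; apply exp_pos| exact Hmain].
    + rewrite <- Rmult_assoc, <- exp_plus. replace (- (K * (a + tau)) + K * (a + tau)) with 0 by ring. rewrite exp_0; ring.
  - rewrite <- exp_plus. f_equal. ring.
Qed.

Fixpoint cnt (n : nat) (f : nat -> bool) : nat :=
  match n with O => O | S k => (cnt k f + (if f k then 1 else 0))%nat end.

Lemma cnt_le n f : (cnt n f <= n)%nat.
Proof. induction n; simpl; [lia|]. destruct (f n); lia. Qed.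

Lemma cnt_mono n f g : (forall i, (i < n)%nat -> f i = true -> g i = true) -> (cnt n f <= cnt n g)%nat.
Proof.
  induction n; intros H; simpl; [lia|].
  assert (cnt n f <= cnt n g)%nat by (apply IHn; intros; apply H; [lia|assumption]).
  destruct (f n) eqn:Ef; [rewrite (H n) by (lia||assumption); lia|]. destruct (g n); lia.
Qed.

Lemma cnt_strict n f g i0 : (forall i, (i < n)%nat -> f i = true -> g i = true) ->
  (i0 < n)%nat -> f i0 = false -> g i0 = true -> (cnt n f + 1 <= cnt n g)%nat.
Proof.
  induction n; intros H Hi Hf Hg; [lia|]. simpl.
  destruct (Nat.eq_dec i0 n) as [->|Hne].
  - rewrite Hf, Hg. assert (cnt n f <= cnt n g)%nat by (apply cnt_mono; intros; apply H; [lia|assumption]). lia.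
  - assert (cnt n f + 1 <= cnt n g)%nat by (apply IHn; [intros; apply H; [lia|assumption]| lia| assumption| assumption]).
    destruct (f n) eqn:Ef; [rewrite (H n) by (lia||assumption); lia|]. destruct (g n); lia.
Qed.

Lemma cnt_full n f : (n <= cnt n f)%nat -> forall i, (i < n)%nat -> f i = true.
Proof.
  intros H i Hi. destruct (f i) eqn:Ef; [reflexivity|].
  assert (cnt n f + 1 <= cnt n (fun _ => true))%nat by (apply (cnt_strict n f _ i); auto).
  pose proof (cnt_le n (fun _ => true)). lia.
Qed.

Lemma cnt_cover n f g : (forall i, (i < n)%nat -> f i = true \/ g i = true) -> (n <= cnt n f + cnt n g)%nat.
Proof.
  induction n; intros H; simpl; [lia|].
  assert (n <= cnt n f + cnt n g)%nat by (apply IHn; intros; apply H; lia).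
  destruct (H n (Nat.lt_succ_diag_r n)) as [E|E]; rewrite E; [destruct (g n)| destruct (f n)]; lia.
Qed.

Lemma last_default {A} (l : list A) (x d1 d2 : A) : last (x :: l) d1 = last (x :: l) d2.
Proof.
  revert x. induction l as [|y l IH]; intros x; [reflexivity|].
  change (last (y :: l) d1 = last (y :: l) d2). apply IH.
Qed.

Lemma chain_exit (E : nat -> nat -> Prop) (S : nat -> bool) p r :
  chain E p -> head p = Some r -> S r = true -> S (last p r) = false ->
  exists a b, In a p /\ In b p /\ E b a /\ S a = true /\ S b = false.
Proof.
  revert r. induction p as [|x rest IH]; intros r Hc Hh Hr Hl; [discriminate|].
  simpl in Hh. injection Hh as ->.
  destruct rest as [|y rest'].
  - simpl in Hl. congruence.
  - destruct Hc as [Exy Hc].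
    destruct (S y) eqn:Sy.
    + destruct (IH y Hc eq_refl Sy) as [a [b [Ha [Hb H]]]].
      * rewrite (last_default rest' y y r). exact Hl.
      * exists a, b. split; [right; exact Ha| split; [right; exact Hb| exact H]].
    + exists r, y. split; [left; reflexivity| split; [right; left; reflexivity|]]. auto.
Qed.

Lemma ab_comb N (A B : nat -> nat -> bool) (Ed : nat -> nat -> nat -> Prop) :
  (forall i, (i < N)%nat -> A O i = true \/ B O i = true) ->
  (forall k i, (i < N)%nat -> A k i = true -> A (S k) i = true) ->
  (forall k i, (i < N)%nat -> B k i = true -> B (S k) i = true) ->
  (forall k, exists r, (r < N)%nat /\ forall v, (v < N)%nat -> dpath N (Ed k) r v) ->
  (forall k i j, (i < N)%nat -> (j < N)%nat -> Ed k i j -> A k j = true -> A (S k) i = true) ->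
  (forall k i j, (i < N)%nat -> (j < N)%nat -> Ed k i j -> B k j = true -> B (S k) i = true) ->
  (forall i, (i < N)%nat -> A N i = true) \/ (forall i, (i < N)%nat -> B N i = true).
Proof.
  intros Hcov HA HB Hroot SA SB.
  assert (Hcovk : forall k i, (i < N)%nat -> A k i = true \/ B k i = true).
  { induction k; intros i Hi; [apply Hcov; exact Hi|].
    destruct (IHk i Hi) as [H|H]; [left; apply HA| right; apply HB]; assumption. }
  assert (Grow : forall (C : nat -> nat -> bool) k,
    (forall i, (i < N)%nat -> C k i = true -> C (S k) i = true) ->
    (forall i j, (i < N)%nat -> (j < N)%nat -> Ed k i j -> C k j = true -> C (S k) i = true) ->
    forall r, (r < N)%nat -> (forall v, (v < N)%nat -> dpath N (Ed k) r v) -> C k r = true ->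
    (forall i, (i < N)%nat -> C (S k) i = true) \/ (cnt N (C k) + 1 <= cnt N (C (S k)))%nat).
  { intros C k HC SC r Hr Hp Cr.
    destruct (classic (forall i, (i < N)%nat -> C k i = true)) as [Hall|Hnot].
    - left. intros i Hi. apply HC; [exact Hi| apply Hall; exact Hi].
    - right. apply not_all_ex_not in Hnot. destruct Hnot as [v Hv].
      assert (Hv1 : (v < N)%nat) by (destruct (lt_dec v N); [assumption| exfalso; apply Hv; intros; lia]).
      assert (Hv2 : C k v = false) by (destruct (C k v) eqn:E; [exfalso; apply Hv; intros; reflexivity| reflexivity]).
      destruct (Hp v Hv1) as [p [_ [Hf [Hh [Hl Hc]]]]].
      destruct (chain_exit (Ed k) (C k) p r Hc Hh Cr) as [a [b [Ha [Hb [Eba [Ca Cb]]]]]].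
      { rewrite Hl; exact Hv2. }
      rewrite Forall_forall in Hf.
      apply (cnt_strict N (C k) (C (S k)) b); [exact HC| apply Hf; exact Hb| exact Cb|].
      apply (SC b a); [apply Hf; exact Hb| apply Hf; exact Ha| exact Eba| exact Ca]. }
  assert (Claim : forall k, (forall i, (i < N)%nat -> A k i = true) \/ (forall i, (i < N)%nat -> B k i = true)
                   \/ (N + k <= cnt N (A k) + cnt N (B k))%nat).
  { induction k.
    - right; right. rewrite Nat.add_0_r. apply cnt_cover. exact Hcov.
    - destruct IHk as [H|[H|H]].
      + left. intros i Hi. apply HA; [exact Hi| apply H; exact Hi].
      + right; left. intros i Hi. apply HB; [exact Hi| apply H; exact Hi].
      + destruct (Hroot k) as [r [Hr Hp]].
        assert (mA : (cnt N (A k) <= cnt N (A (S k)))%nat) by (apply cnt_mono; apply HA).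
        assert (mB : (cnt N (B k) <= cnt N (B (S k)))%nat) by (apply cnt_mono; apply HB).
        destruct (Hcovk k r Hr) as [Cr|Cr].
        * destruct (Grow A k (HA k) (SA k) r Hr Hp Cr) as [G|G]; [left; exact G| right; right; lia].
        * destruct (Grow B k (HB k) (SB k) r Hr Hp Cr) as [G|G]; [right; left; exact G| right; right; lia]. }
  destruct (Claim N) as [H|[H|H]]; [left; exact H| right; exact H|].
  left. apply cnt_full. pose proof (cnt_le N (B N)). lia.
Qed.

Definition wlow N (w : R -> nat -> nat -> R) delta : Prop :=
  forall t i j, (i < N)%nat -> (j < N)%nat -> 0 < w t i j -> delta <= w t i j.
Definition wact (w : R -> nat -> nat -> R) tau : Prop :=
  forall s, 0 <= s -> exists a, s - tau <= a <= s /\ forall u i j, a <= u <= a + tau -> w u i j = w s i j.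

Lemma exp_le x y : x <= y -> exp x <= exp y.
Proof. intros H. destruct (Rle_lt_or_eq_dec x y H) as [H'|H']; [left; apply exp_increasing; exact H'| rewrite H'; lra]. Qed.

Lemma exp_mono_neg K x P : 0 <= K -> x <= P -> exp (- K * P) <= exp (- K * x).
Proof. intros HK HP. apply exp_le. assert (K * x <= K * P) by (apply Rmult_le_compat_l; lra). lra. Qed.

Lemma fam_step ts tauD N w W delta tau T y t0 :
  dw ts tauD -> wbound N w W -> 0 <= W -> wlow N w delta -> 0 < delta -> wact w tau -> 0 < tau -> 0 < T ->
  cons_dyn ts N w y -> 0 <= t0 ->
  (forall t i, t0 <= t -> (i < N)%nat -> 0 <= y i t) ->
  forall e c, t0 <= e -> 0 <= c ->
  (forall i, (i < N)%nat -> c <= y i e ->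
     exp (-3 * (INR N * W) * (T + 2 * tau)) * Rmin 1 (delta * tau) * c <= y i (e + (T + 2 * tau))) /\
  (forall i j, (i < N)%nat -> (j < N)%nat -> (exists s, e + tau <= s < e + tau + T /\ w s i j > 0) ->
     c <= y j e ->
     exp (-3 * (INR N * W) * (T + 2 * tau)) * Rmin 1 (delta * tau) * c <= y i (e + (T + 2 * tau))).
Proof.
  intros Hd Hw HW Hlow Hdel Hact Htau HT Hdyn Ht0 Hnn e c He Hc.
  set (K := INR N * W). set (P := T + 2 * tau). set (X := exp (- K * P)).
  assert (HK : 0 <= K) by (unfold K; apply Rmult_le_pos; [apply pos_INR| exact HW]).
  assert (HX : 0 < X) by (unfold X; apply exp_pos).
  assert (HX3 : exp (-3 * K * P) = X * X * X).
  { unfold X. rewrite <- !exp_plus. f_equal. ring. }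
  assert (Hmin : 0 <= Rmin 1 (delta * tau) <= 1).
  { split; [apply Rmin_glb; [lra| apply Rmult_le_pos; lra]| apply Rmin_l]. }
  assert (HX1 : X <= 1).
  { unfold X. rewrite <- exp_0. apply exp_le. assert (0 <= K * P) by (apply Rmult_le_pos; unfold P; lra). lra. }
  assert (Hrho : exp (-3 * K * P) * Rmin 1 (delta * tau) <= X).
  { rewrite HX3. assert (X * X <= 1) by (rewrite <- (Rmult_1_r 1); apply Rmult_le_compat; lra).
    assert (X * X * X <= 1 * X) by (apply Rmult_le_compat_r; lra).
    assert (0 <= X * X * X) by (repeat apply Rmult_le_pos; lra).
    assert (X * X * X * Rmin 1 (delta * tau) <= X * X * X * 1) by (apply Rmult_le_compat_l; lra).
    rewrite Rmult_1_r in H2. rewrite Rmult_1_l in H0.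
    lra. }
  assert (Hdec := decay ts tauD N w W y t0 Hd Hw Hdyn Ht0 Hnn).
  fold K in Hdec.
  split.
  - intros i Hi Hci.
    pose proof (Hdec i e (e + P) Hi ltac:(lra) ltac:(unfold P; lra)) as H1.
    replace (e + P - e) with P in H1 by ring.
    fold X in H1.
    assert (X * c <= X * y i e) by (apply Rmult_le_compat_l; lra).
    assert (exp (-3 * K * P) * Rmin 1 (delta * tau) * c <= X * c) by (apply Rmult_le_compat_r; lra).
    lra.
  - intros i j Hi Hj [s [Hs Hws]] Hcj.
    destruct (Hact s) as [a [Ha Hwa]]; [lra|].
    assert (Hdl : delta <= w s i j) by (apply Hlow; [exact Hi| exact Hj| lra]).
    assert (Hyj : forall u, a <= u <= a + tau -> X * c <= y j u).
    { intros u Hu. assert (H1 : exp (- K * (u - e)) * y j e <= y j u) by (apply Hdec; [exact Hj| lra| lra]).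
      assert (exp (- K * P) <= exp (- K * (u - e))) by (apply exp_mono_neg; [exact HK| unfold P; lra]).
      fold X in H.
      assert (X * c <= exp (- K * (u - e)) * c) by (apply Rmult_le_compat_r; lra).
      assert (exp (- K * (u - e)) * c <= exp (- K * (u - e)) * y j e) by (apply Rmult_le_compat_l; [left; apply exp_pos| exact Hcj]).
      lra. }
    assert (Hg := growth ts tauD N w W y t0 Hd Hw Hdyn Ht0 Hnn i j a tau delta (X * c) Hi Hj ltac:(lra) Htau ltac:(lra)
      ltac:(apply Rmult_le_pos; lra)).
    fold K in Hg.
    assert (Hg2 : exp (- K * tau) * (delta * (X * c) * tau) <= y i (a + tau)).
    { apply Hg; [| exact Hyj]. intros u Hu. rewrite (Hwa u i j) by lra. exact Hdl. }
    assert (Hg3 : X * (delta * (X * c) * tau) <= y i (a + tau)).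
    { assert (exp (- K * P) <= exp (- K * tau)) by (apply exp_mono_neg; [exact HK| unfold P; lra]).
      fold X in H. assert (0 <= delta * (X * c) * tau) by (apply Rmult_le_pos; [apply Rmult_le_pos; [lra| apply Rmult_le_pos; lra]| lra]).
      assert (X * (delta * (X * c) * tau) <= exp (- K * tau) * (delta * (X * c) * tau)) by (apply Rmult_le_compat_r; lra).
      lra. }
    assert (Hg4 : exp (- K * (e + P - (a + tau))) * y i (a + tau) <= y i (e + P))
      by (apply Hdec; [exact Hi| lra| unfold P; lra]).
    assert (Hg5 : X * y i (a + tau) <= exp (- K * (e + P - (a + tau))) * y i (a + tau)).
    { apply Rmult_le_compat_r; [apply Hnn; [lra| exact Hi]|]. apply exp_mono_neg; [exact HK| lra]. }
    assert (Hg6 : X * (X * (delta * (X * c) * tau)) <= X * y i (a + tau)) by (apply Rmult_le_compat_l; lra).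
    assert (Hfin : exp (-3 * K * P) * Rmin 1 (delta * tau) * c <= X * (X * (delta * (X * c) * tau))).
    { rewrite HX3. replace (X * (X * (delta * (X * c) * tau))) with (X * X * X * (delta * tau) * c) by ring.
      apply Rmult_le_compat_r; [exact Hc|]. apply Rmult_le_compat_l; [apply Rmult_le_pos; [apply Rmult_le_pos|]; lra| apply Rmin_r]. }
    lra.
Qed.

Definition ble (a b : R) : bool := if Rle_dec a b then true else false.
Lemma bleP a b : ble a b = true <-> a <= b.
Proof. unfold ble; destruct (Rle_dec a b); split; intros; auto; discriminate || contradiction. Qed.

Lemma cons_dyn_aff ts N w z (s b : R) : cons_dyn ts N w z ->
  cons_dyn ts N w (fun i t => s * z i t + b).
Proof.
  intros [Hc Hd]. split.
  - intros i t Hi. apply continuity_pt_plus; [|apply continuity_pt_const; intros p q; reflexivity].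
    apply continuity_pt_mult; [apply continuity_pt_const; intros p q; reflexivity| apply Hc; exact Hi].
  - intros i t Hi Hp.
    replace (rsum N (fun j => w t i j * (s * z j t + b - (s * z i t + b))))
      with (s * rsum N (fun j => w t i j * (z j t - z i t)) + 0).
    + apply (derivable_pt_lim_plus (fun u => s * z i u) (fun _ => b)); [apply dlim_scal, Hd; assumption| apply derivable_pt_lim_const].
    + rewrite Rplus_0_r, <- rsum_scal. apply rsum_ext. intros; ring.
Qed.

Lemma pow_le1 x n : 0 <= x -> x <= 1 -> x ^ n <= 1.
Proof. intros H0 H1. induction n; simpl; [lra|]. assert (x * x ^ n <= 1 * 1) by (apply Rmult_le_compat; try lra; apply pow_le; lra). lra. Qed.

Lemma contraction ts tauD N w W delta tau T z :
  dw ts tauD -> (1 <= N)%nat -> wbound N w W -> wlow N w delta -> 0 < delta -> wact w tau -> 0 < tau -> 0 < T ->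
  (forall t, 0 <= t -> exists r, (r < N)%nat /\
     forall v, (v < N)%nat -> dpath N (fun i j => exists s, t <= s < t + T /\ w s i j > 0) r v) ->
  cons_dyn ts N w z ->
  exists gam L, 0 < gam /\ gam <= 1 /\ 0 <= L /\
    forall t0 M mu, 0 <= t0 -> (forall i, (i < N)%nat -> mu <= z i t0 /\ z i t0 <= M) ->
    exists M' mu', M' - mu' <= (1 - gam) * (M - mu) /\
      forall t, t0 + L <= t -> forall i, (i < N)%nat -> mu' <= z i t /\ z i t <= M'.
Proof.
  intros Hd HN Hw Hlow Hdel Hact Htau HT Hconn Hz.
  assert (HW : 0 <= W) by (destruct (Hw 0 O O ltac:(lia) ltac:(lia)); lra).
  set (P := T + 2 * tau).
  set (rho := exp (-3 * (INR N * W) * P) * Rmin 1 (delta * tau)).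
  assert (Hrho : 0 < rho <= 1).
  { unfold rho. split.
    - apply Rmult_lt_0_compat; [apply exp_pos|]. apply Rmin_glb_lt; [lra| apply Rmult_lt_0_compat; lra].
    - assert (exp (-3 * (INR N * W) * P) <= 1).
      { rewrite <- exp_0. apply exp_le. assert (0 <= INR N * W * P) by (apply Rmult_le_pos; [apply Rmult_le_pos; [apply pos_INR| lra]| unfold P; lra]). lra. }
      assert (Rmin 1 (delta * tau) <= 1) by apply Rmin_l.
      assert (0 <= Rmin 1 (delta * tau)) by (apply Rmin_glb; [lra| apply Rmult_le_pos; lra]).
      assert (exp (-3 * (INR N * W) * P) * Rmin 1 (delta * tau) <= 1 * 1)
        by (apply Rmult_le_compat; try lra; left; apply exp_pos). lra. }
  exists (rho ^ N / 2), (INR N * P).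
  assert (HrN : 0 < rho ^ N) by (apply pow_lt; lra).
  assert (HrN1 : rho ^ N <= 1) by (apply pow_le1; lra).
  split; [lra| split; [lra| split; [apply Rmult_le_pos; [apply pos_INR| unfold P; lra]|]]].
  intros t0 M mu Ht0 Hb.
  assert (Hzn : cons_dyn ts N w (fun i t => -1 * z i t + 0)) by (apply cons_dyn_aff; exact Hz).
  assert (Hmax : forall t1 M1, t0 <= t1 -> (forall i, (i < N)%nat -> z i t1 <= M1) ->
     forall t, t1 <= t -> forall i, (i < N)%nat -> z i t <= M1).
  { intros t1 M1 Ht1 HM1. apply (maxp ts tauD N w W z Hd Hw Hz t1 M1); [lra| exact HM1]. }
  assert (Hmin : forall t1 m1, t0 <= t1 -> (forall i, (i < N)%nat -> m1 <= z i t1) ->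
     forall t, t1 <= t -> forall i, (i < N)%nat -> m1 <= z i t).
  { intros t1 m1 Ht1 Hm1 t Ht i Hi.
    assert (H := maxp ts tauD N w W _ Hd Hw Hzn t1 (- m1) ltac:(lra)).
    assert (-1 * z i t + 0 <= - m1); [|lra].
    apply (H ltac:(intros k Hk; specialize (Hm1 k Hk); lra) t Ht i Hi). }
  assert (Hbnd : forall t i, t0 <= t -> (i < N)%nat -> mu <= z i t /\ z i t <= M).
  { intros t i Ht Hi. split.
    - apply (Hmin t0 mu); [lra| intros k Hk; apply Hb; exact Hk| exact Ht| exact Hi].
    - apply (Hmax t0 M); [lra| intros k Hk; apply Hb; exact Hk| exact Ht| exact Hi]. }
  set (D := M - mu).
  assert (HD : 0 <= D) by (destruct (Hb O ltac:(lia)); unfold D; lra).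
  set (E := fun k : nat => t0 + INR k * P).
  set (c := fun k : nat => rho ^ k * (D / 2)).
  assert (Hc : forall k, 0 <= c k) by (intros k; unfold c; apply Rmult_le_pos; [apply pow_le; lra| lra]).
  assert (HE : forall k, t0 <= E k) by (intros k; unfold E; assert (0 <= INR k * P) by (apply Rmult_le_pos; [apply pos_INR| unfold P; lra]); lra).
  assert (HES : forall k, E (S k) = E k + P) by (intros k; unfold E; rewrite S_INR; ring).
  assert (HcS : forall k, c (S k) = rho * c k) by (intros k; unfold c; simpl; ring).
  set (y := fun i t => -1 * z i t + M).
  set (v := fun i t => 1 * z i t + - mu).
  assert (Hy : cons_dyn ts N w y) by (apply cons_dyn_aff; exact Hz).
  assert (Hv : cons_dyn ts N w v) by (apply cons_dyn_aff; exact Hz).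
  assert (Hyn : forall t i, t0 <= t -> (i < N)%nat -> 0 <= y i t)
    by (intros t i Ht Hi; destruct (Hbnd t i Ht Hi); unfold y; lra).
  assert (Hvn : forall t i, t0 <= t -> (i < N)%nat -> 0 <= v i t)
    by (intros t i Ht Hi; destruct (Hbnd t i Ht Hi); unfold v; lra).
  assert (Fy := fam_step ts tauD N w W delta tau T y t0 Hd Hw HW Hlow Hdel Hact Htau HT Hy Ht0 Hyn).
  assert (Fv := fam_step ts tauD N w W delta tau T v t0 Hd Hw HW Hlow Hdel Hact Htau HT Hv Ht0 Hvn).
  fold P in Fy, Fv. fold rho in Fy, Fv.
  set (A := fun k i => ble (c k) (y i (E k))).
  set (B := fun k i => ble (c k) (v i (E k))).
  assert (Hab := ab_comb N A B (fun k i j => exists s, E k + tau <= s < E k + tau + T /\ w s i j > 0)).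
  destruct Hab as [HA|HB].
  - intros i Hi. unfold A, B. rewrite !bleP. destruct (Hbnd t0 i ltac:(lra) Hi).
    unfold c, E, y, v. simpl. replace (t0 + 0 * P) with t0 by ring. unfold D in *. destruct (Rle_dec (D/2) (M - z i t0)); [left|right]; unfold D in *; lra.
  - intros k i Hi. unfold A. rewrite !bleP. intros H.
    rewrite HES, HcS. apply (proj1 (Fy (E k) (c k) (HE k) (Hc k))); assumption.
  - intros k i Hi. unfold B. rewrite !bleP. intros H.
    rewrite HES, HcS. apply (proj1 (Fv (E k) (c k) (HE k) (Hc k))); assumption.
  - intros k. apply Hconn. pose proof (HE k). lra.
  - intros k i j Hi Hj Hed. unfold A. rewrite !bleP. intros H.
    rewrite HES, HcS. apply (proj2 (Fy (E k) (c k) (HE k) (Hc k)) i j); assumption.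
  - intros k i j Hi Hj Hed. unfold B. rewrite !bleP. intros H.
    rewrite HES, HcS. apply (proj2 (Fv (E k) (c k) (HE k) (Hc k)) i j); assumption.
  - exists (M - c N), mu. split.
    + unfold c, D. right. field.
    + intros t Ht i Hi. split.
      * apply (Hbnd t i); [unfold P in *; pose proof (HE N); unfold E in *; lra| exact Hi].
      * apply (Hmax (E N) (M - c N)); [apply HE| | unfold E; exact Ht| exact Hi].
        intros k Hk. specialize (HA k Hk). unfold A in HA. rewrite bleP in HA. unfold y in HA. lra.
  - exists M, (mu + c N). split.
    + unfold c, D. right. field.
    + intros t Ht i Hi. split.
      * apply (Hmin (E N) (mu + c N)); [apply HE| | unfold E; exact Ht| exact Hi].
        intros k Hk. specialize (HB k Hk). unfold B in HB. rewrite bleP in HB. unfold v in HB. lra.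
      * apply (Hbnd t i); [unfold P in *; pose proof (HE N); unfold E in *; lra| exact Hi].
Qed.

Lemma nat_unb x : exists n, x < INR n.
Proof.
  destruct (archimed x) as [Ha _].
  destruct (Rle_or_lt (IZR (up x)) 0) as [Hle|Hlt].
  - exists O; simpl; lra.
  - exists (Z.to_nat (up x)). rewrite INR_IZR_INZ, Z2Nat.id; [lra|]. apply le_IZR. lra.
Qed.

Lemma small_pow q D eps : 0 <= q < 1 -> 0 <= D -> 0 < eps -> exists k, q ^ k * D < eps.
Proof.
  intros Hq HD He.
  destruct (pow_lt_1_zero q ltac:(rewrite Rabs_right; lra) (eps / (D + 1)) ltac:(apply Rdiv_lt_0_compat; lra)) as [k Hk].
  exists k. specialize (Hk k (Nat.le_refl k)). rewrite Rabs_right in Hk by (apply Rle_ge, pow_le; lra).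
  assert (q ^ k * (D + 1) < eps / (D + 1) * (D + 1)) by (apply Rmult_lt_compat_r; lra).
  replace (eps / (D + 1) * (D + 1)) with eps in H by (field; lra).
  assert (0 <= q ^ k) by (apply pow_le; lra). nra.
Qed.

Lemma consensus_conv ts tauD N w W delta tau T z :
  dw ts tauD -> (1 <= N)%nat -> wbound N w W -> wlow N w delta -> 0 < delta -> wact w tau -> 0 < tau -> 0 < T ->
  (forall t, 0 <= t -> exists r, (r < N)%nat /\
     forall v, (v < N)%nat -> dpath N (fun i j => exists s, t <= s < t + T /\ w s i j > 0) r v) ->
  cons_dyn ts N w z ->
  exists l, forall i, (i < N)%nat -> forall eps, eps > 0 -> exists T0, forall t, t >= T0 -> Rabs (z i t - l) < eps.
Proof.
  intros Hd HN Hw Hlow Hdel Hact Htau HT Hconn Hz.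
  destruct (contraction ts tauD N w W delta tau T z Hd HN Hw Hlow Hdel Hact Htau HT Hconn Hz)
    as [g [L [Hg0 [Hg1 [HL Hctr]]]]].
  set (M0 := rsum N (fun j => Rabs (z j 0))).
  set (D0 := M0 - - M0).
  assert (HD0 : 0 <= D0).
  { unfold D0, M0. assert (0 <= rsum N (fun j => Rabs (z j 0))) by (apply rsum_nonneg; intros; apply Rabs_pos). lra. }
  assert (Claim : forall k, exists M mu, M - mu <= (1 - g) ^ k * D0 /\
     forall t, INR (S k) * L <= t -> forall i, (i < N)%nat -> mu <= z i t /\ z i t <= M).
  { induction k.
    - destruct (Hctr 0 M0 (- M0)) as [M' [mu' [H1 H2]]]; [lra| |].
      + intros i Hi. pose proof (rsum_abs_bound N (fun j => z j 0) i Hi). cbv beta in H. fold M0 in H.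
        pose proof (Rle_abs (z i 0)) as Ha1; pose proof (Rle_abs (- z i 0)) as Ha2; rewrite Rabs_Ropp in Ha2; match goal with |- ?G => idtac G end; lra.
      + exists M', mu'. split.
        * simpl. fold D0 in H1. assert ((1 - g) * D0 <= D0) by nra. lra.
        * intros t Ht. apply H2. simpl in Ht. lra.
    - destruct IHk as [M [mu [H1 H2]]].
      assert (Hpos : 0 <= INR (S k) * L) by (apply Rmult_le_pos; [apply pos_INR| lra]).
      destruct (Hctr (INR (S k) * L) M mu Hpos) as [M' [mu' [H3 H4]]].
      + intros i Hi. apply H2; [lra| exact Hi].
      + exists M', mu'. split.
        * simpl. assert ((1 - g) * (M - mu) <= (1 - g) * ((1 - g) ^ k * D0)) by (apply Rmult_le_compat_l; lra). lra.
        * intros t Ht. apply H4. rewrite S_INR in Ht. lra. }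
  assert (Hsmall : forall eps, 0 < eps -> exists k, (1 - g) ^ k * D0 < eps)
    by (intros eps He; apply small_pow; lra).
  set (u := fun n : nat => z O (INR n)).
  assert (Hcau : Cauchy_crit u).
  { intros eps He. destruct (Hsmall eps He) as [k Hk]. destruct (Claim k) as [M [mu [H1 H2]]].
    destruct (nat_unb (INR (S k) * L)) as [n0 Hn0]. exists n0. intros n m Hn Hm.
    apply le_INR in Hn. apply le_INR in Hm.
    destruct (H2 (INR n) ltac:(lra) O ltac:(lia)). destruct (H2 (INR m) ltac:(lra) O ltac:(lia)).
    unfold Rdist, u. apply Rabs_def1; lra. }
  destruct (R_complete u Hcau) as [l Hl].
  exists l. intros i Hi eps He.
  destruct (Hsmall (eps / 2) ltac:(lra)) as [k Hk]. destruct (Claim k) as [M [mu [H1 H2]]].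
  destruct (Hl (eps / 2) ltac:(lra)) as [n1 Hn1].
  destruct (nat_unb (INR (S k) * L)) as [n0 Hn0].
  set (n := Nat.max n0 n1).
  assert (Hn0' : INR n0 <= INR n) by (apply le_INR; lia).
  specialize (Hn1 n ltac:(lia)). unfold Rdist, u in Hn1.
  exists (INR (S k) * L). intros t Ht.
  destruct (H2 t ltac:(lra) i Hi). destruct (H2 (INR n) ltac:(lra) O ltac:(lia)).
  apply Rabs_def2 in Hn1. apply Rabs_def1; lra.
Qed.

Definition copp (z : R * R) : R * R := (- fst z, - snd z).
Fixpoint csum (n : nat) (f : nat -> R * R) : R * R :=
  match n with O => (0, 0) | S k => cadd (csum k f) (f k) end.
Fixpoint cf (lam : nat -> R * R) (k i : nat) : R * R :=
  match k with
  | O => match i with O => (1, 0) | S _ => (0, 0) end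
  | S k' => cadd (match i with O => (0, 0) | S i' => cf lam k' i' end)
                 (cmul (copp (lam k')) (cf lam k' i))
  end.

Lemma csum_ext n f g : (forall i, (i < n)%nat -> f i = g i) -> csum n f = csum n g.
Proof. induction n; intros H; simpl; [reflexivity|]. rewrite IHn, H; [reflexivity|lia|intros; apply H; lia]. Qed.

Lemma csum_shift n g : cadd (g O) (csum n (fun i => g (S i))) = csum (S n) g.
Proof.
  induction n; simpl.
  - destruct (g O); unfold cadd; simpl; f_equal; ring.
  - simpl in IHn. rewrite <- IHn. destruct (g O), (csum n (fun i => g (S i))), (g (S n)).
    unfold cadd; simpl; f_equal; ring.
Qed.

Lemma fold_map_seq f n st :
  fold_right cadd (0, 0) (map f (seq st n)) = csum n (fun i => f (st + i)%nat).
Proof.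
  revert st. induction n; intros st; [reflexivity|].
  cbn [seq map fold_right]. rewrite IHn. rewrite <- csum_shift. rewrite Nat.add_0_r.
  f_equal. apply csum_ext. intros i _. f_equal. lia.
Qed.

Lemma charpoly_csum d a s : charpoly (S d) a s =
  cadd (cpow s d) (csum d (fun i => cmul (cofr (a (S i))) (cpow s i))).
Proof.
  unfold charpoly. replace (S d - 1)%nat with d by lia. f_equal.
  rewrite fold_map_seq. apply csum_ext. intros i _. f_equal; f_equal; lia.
Qed.

Lemma cadd_comm z w : cadd z w = cadd w z.
Proof. destruct z, w; unfold cadd; simpl; f_equal; ring. Qed.

Module Bridge.
Import HB.structures.
Import mathcomp.boot.all_boot mathcomp.order.all_order mathcomp.algebra.all_algebra.
Import mathcomp.reals_stdlib.Rstruct mathcomp.real_closed.complex.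
Import GRing.Theory.
Local Open Scope ring_scope.

Definition phi (x : R[i]) : R * R := (complex.Re x, complex.Im x).

Lemma phi_mul (x y : R[i]) : phi (x * y) = cmul (phi x) (phi y).
Proof. by case: x => a b; case: y => c d. Qed.
Lemma phi_add (x y : R[i]) : phi (x + y) = cadd (phi x) (phi y).
Proof. by case: x => a b; case: y => c d. Qed.
Lemma phi_opp (x : R[i]) : phi (- x) = copp (phi x).
Proof. by case: x => a b. Qed.
Lemma phi_exp (x : R[i]) n : phi (x ^+ n) = cpow (phi x) n.
Proof. elim: n => [|n IH]; first by []. by rewrite exprS phi_mul IH. Qed.
Lemma phi_sum n (F : nat -> R[i]) : phi (\sum_(i < n) F i) = csum n (fun i => phi (F i)).
Proof. elim: n => [|n IH]; first by rewrite big_ord0. by rewrite big_ord_recr phi_add IH. Qed.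

Lemma bridge (d : nat) (a : nat -> R) : exists lam : nat -> R * R,
  (forall j, (j < d)%coq_nat -> charpoly (S d) a (lam j) = (0%R, 0%R)) /\
  (forall i, (i <= d)%coq_nat -> cf lam d i = if Nat.eqb i d then (1%R, 0%R) else (a (S i), 0%R)).
Proof.
pose E := fun i : nat => if i == d then (1 : R[i]) else ((a i.+1)%:C)%C.
pose P := \poly_(i < d.+1) E i.
have sP : size P = d.+1.
  by apply: size_poly_eq; rewrite /E eqxx oner_eq0.
have lP : lead_coef P = 1 by rewrite lead_coefE sP coef_poly ltnSn /E eqxx.
have [rs Hrs] := closed_field_poly_normal P.
rewrite lP scale1r in Hrs.
have srs : size rs = d by move: (size_prod_XsubC rs id); rewrite -Hrs sP => -[].
exists (fun j => phi (nth 0 rs j)).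
split.
- move=> j /ltP jd.
  have rt : root P (nth 0 rs j) by rewrite Hrs root_prod_XsubC mem_nth // srs.
  move/eqP: rt => rt.
  have -> : charpoly d.+1 a (phi (nth 0 rs j)) = phi P.[nth 0 rs j].
    rewrite charpoly_csum horner_poly big_ord_recr /= phi_add.
    rewrite (phi_sum d (fun i => E i * rs`_j ^+ i)) /E eqxx mul1r phi_exp cadd_comm.
    congr cadd; apply: csum_ext => i /ltP id.
    have -> : (i == d) = false by apply/negbTE; rewrite neq_ltn id.
    by rewrite phi_mul phi_exp.
  by rewrite rt.
- move=> i /leP id.
  pose Q k := \prod_(j < k) ('X - (rs`_j)%:P).
  have HQ : forall k i, phi (Q k)`_i = cf (fun j => phi (nth 0 rs j)) k i.
    elim=> [|k IH] i0.
      rewrite /Q big_ord0 coef1. by case: i0.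
    rewrite /Q big_ord_recr /= -/(Q k) mulrBr coefB coefMX coefMC -mulrN [_ * - _]mulrC.
    rewrite phi_add phi_mul phi_opp.
    case: i0 => [|i0] /=; rewrite ?IH //.
  have PQ : P = Q d.
    by rewrite Hrs (big_nth 0) srs big_mkord.
  rewrite -HQ -PQ coef_poly /E.
  have -> : (i < d.+1)%N by rewrite ltnS.
  by case: (Nat.eqb_spec i d) => [->|/eqP /negbTE ->]; rewrite ?eqxx.
Qed.
End Bridge.

Lemma cv_const c : cv_infty_to (fun _ => c) c.
Proof. intros e He. exists 0. intros t _. rewrite Rminus_diag, Rabs_R0; lra. Qed.
Lemma cv_plus f g A B : cv_infty_to f A -> cv_infty_to g B -> cv_infty_to (fun t => f t + g t) (A + B).
Proof.
  intros Hf Hg e He. destruct (Hf (e/2) ltac:(lra)) as [T1 H1]. destruct (Hg (e/2) ltac:(lra)) as [T2 H2].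
  exists (Rmax T1 T2). intros t Ht. specialize (H1 t ltac:(pose proof (Rmax_l T1 T2); lra)).
  specialize (H2 t ltac:(pose proof (Rmax_r T1 T2); lra)).
  apply Rabs_def2 in H1. apply Rabs_def2 in H2. apply Rabs_def1; lra.
Qed.
Lemma cv_scal c f A : cv_infty_to f A -> cv_infty_to (fun t => c * f t) (c * A).
Proof.
  intros Hf e He. destruct (Hf (e / (Rabs c + 1)) ltac:(apply Rdiv_lt_0_compat; pose proof (Rabs_pos c); lra)) as [T H].
  exists T. intros t Ht. specialize (H t Ht).
  replace (c * f t - c * A) with (c * (f t - A)) by ring. rewrite Rabs_mult.
  apply Rle_lt_trans with ((Rabs c + 1) * Rabs (f t - A)).
  - apply Rmult_le_compat_r; [apply Rabs_pos| lra].
  - apply (Rmult_lt_compat_l (Rabs c + 1)) in H; [|pose proof (Rabs_pos c); lra].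
    replace ((Rabs c + 1) * (e / (Rabs c + 1))) with e in H by (field; pose proof (Rabs_pos c); lra). exact H.
Qed.
Lemma cv_ext f g A : (forall t, f t = g t) -> cv_infty_to f A -> cv_infty_to g A.
Proof. intros E H e He. destruct (H e He) as [T HT]. exists T. intros t Ht. rewrite <- E. apply HT; exact Ht. Qed.
Lemma cv_eq f A B : cv_infty_to f A -> A = B -> cv_infty_to f B.
Proof. intros H ->; exact H. Qed.
Lemma cv_unique f A B : cv_infty_to f A -> cv_infty_to f B -> A = B.
Proof.
  intros HA HB. destruct (Req_dec A B) as [E|E]; [exact E|exfalso].
  set (e := Rabs (A - B) / 2). assert (He : e > 0) by (unfold e; apply Rdiv_lt_0_compat; [apply Rabs_pos_lt; lra| lra]).
  destruct (HA e He) as [T1 H1]. destruct (HB e He) as [T2 H2].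
  specialize (H1 (Rmax T1 T2) ltac:(apply Rle_ge, Rmax_l)). specialize (H2 (Rmax T1 T2) ltac:(apply Rle_ge, Rmax_r)).
  pose proof (Rabs_triang (A - f (Rmax T1 T2)) (f (Rmax T1 T2) - B)).
  replace (A - f (Rmax T1 T2) + (f (Rmax T1 T2) - B)) with (A - B) in H by ring.
  rewrite <- Rabs_Ropp in H1. replace (- (f (Rmax T1 T2) - A)) with (A - f (Rmax T1 T2)) in H1 by ring.
  unfold e in *. lra.
Qed.

Lemma deriv_lim_zero ts tauD f' g' A' B' : dw ts tauD ->
  (forall t, continuity_pt f' t) -> (forall t, inpiece ts t -> derivable_pt_lim f' t (g' t)) ->
  cv_infty_to f' A' -> cv_infty_to g' B' -> B' = 0.
Proof.
  intros Hd.
  assert (Key : forall f g A B, (forall t, continuity_pt f t) -> (forall t, inpiece ts t -> derivable_pt_lim f t (g t)) ->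
      cv_infty_to f A -> cv_infty_to g B -> B <= 0).
  { intros f g A B Hc Hder HfA HgB.
    destruct (Rle_dec B 0) as [Hle|Hgt]; [exact Hle|exfalso]. apply Rnot_le_lt in Hgt.
    destruct (HgB (B / 2) ltac:(lra)) as [T1 H1].
    destruct (HfA 1 ltac:(lra)) as [T2 H2].
    set (T := Rmax (Rmax T1 0) T2).
    assert (HT : T1 <= T /\ 0 <= T /\ T2 <= T).
    { unfold T. pose proof (Rmax_l (Rmax T1 0) T2). pose proof (Rmax_r (Rmax T1 0) T2).
      pose proof (Rmax_l T1 0). pose proof (Rmax_r T1 0). lra. }
    assert (HB8 : 0 < 8 / B) by (apply Rdiv_lt_0_compat; lra).
    assert (Hineq : f T - B / 2 * T <= f (T + 8 / B) - B / 2 * (T + 8 / B)).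
    { apply (mono_piece ts tauD (fun u => f u - B / 2 * u) (fun u => g u - B / 2) T (T + 8 / B) Hd); try lra.
      - intros t _. apply continuity_pt_minus; [apply Hc|].
        apply continuity_pt_mult; [apply continuity_pt_const; intros p q; reflexivity| apply derivable_continuous_pt, derivable_pt_id].
      - intros t Hp _. apply derivable_pt_lim_minus; [apply Hder; exact Hp|].
        pose proof (dlim_scal (B / 2) (fun u => u) 1 t (derivable_pt_lim_id t)) as H. rewrite Rmult_1_r in H; exact H.
      - intros t Hp Ht. specialize (H1 t ltac:(lra)). apply Rabs_def2 in H1. lra. }
    assert (E8 : B / 2 * (8 / B) = 4) by (field; lra).
    pose proof (H2 T ltac:(lra)) as Ha. pose proof (H2 (T + 8 / B) ltac:(lra)) as Hb.
    apply Rabs_def2 in Ha. apply Rabs_def2 in Hb. nra. }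
  intros Hc Hder HfA HgB. rename f' into f, g' into g, A' into A, B' into B.
  assert (B <= 0) by (apply (Key f g A B); assumption).
  assert (- B <= 0).
  { apply (Key (fun t => -1 * f t) (fun t => -1 * g t) (-1 * A) (-B)).
    - intros t. apply continuity_pt_mult; [apply continuity_pt_const; intros p q; reflexivity| apply Hc].
    - intros t Hp. apply dlim_scal, Hder; exact Hp.
    - apply cv_scal; exact HfA.
    - apply cv_eq with (-1 * B); [apply cv_scal; exact HgB| ring]. }
  lra.
Qed.

Lemma dsq (f : R -> R) c f't t : derivable_pt_lim f t f't ->
  derivable_pt_lim (fun u => (f u - c) * (f u - c)) t (2 * (f t - c) * f't).
Proof.
  intros H. assert (H1 : derivable_pt_lim (fun u => f u - c) t (f't - 0)).
  { apply (derivable_pt_lim_minus f (fun _ => c)); [exact H| apply derivable_pt_lim_const]. }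
  rewrite Rminus_0_r in H1.
  pose proof (derivable_pt_lim_mult _ _ _ _ _ H1 H1) as H2. unfold mult_fct in H2.
  replace (2 * (f t - c) * f't) with (f't * (f t - c) + (f t - c) * f't) by ring. exact H2.
Qed.

Lemma exp_neg_bound a s : 0 < a -> 0 < s -> exp (- (a * s)) <= 1 / (1 + a * s).
Proof.
  intros Ha Hs. assert (Has : 0 < a * s) by (apply Rmult_lt_0_compat; lra). pose proof (exp_ineq1 (a * s) ltac:(lra)) as H.
  rewrite exp_Ropp. unfold Rdiv. rewrite Rmult_1_l. apply Rinv_le_contravar; lra.
Qed.

Lemma fo_real ts tauD (u1 u2 F1 F2 : R -> R) al be l1 l2 :
  dw ts tauD -> al < 0 ->
  (forall t, continuity_pt u1 t) -> (forall t, continuity_pt u2 t) ->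
  (forall t, inpiece ts t -> derivable_pt_lim u1 t (al * u1 t - be * u2 t + F1 t) /\
                             derivable_pt_lim u2 t (be * u1 t + al * u2 t + F2 t)) ->
  cv_infty_to F1 l1 -> cv_infty_to F2 l2 ->
  exists p q, cv_infty_to u1 p /\ cv_infty_to u2 q.
Proof.
  intros Hd Hal Hc1 Hc2 Hder HF1 HF2.
  set (n := al * al + be * be).
  assert (Hn : 0 < n) by (unfold n; nra).
  set (p := - (al * l1 + be * l2) / n). set (q := (be * l1 - al * l2) / n).
  assert (Ep : al * p - be * q + l1 = 0) by (unfold p, q, n; field; apply Rgt_not_eq; nra).
  assert (Eq : be * p + al * q + l2 = 0) by (unfold p, q, n; field; apply Rgt_not_eq; nra).
  set (a := - al). assert (Ha : 0 < a) by (unfold a; lra).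
  set (V := fun u => (u1 u - p) * (u1 u - p) + (u2 u - q) * (u2 u - q)).
  assert (Main : forall eps, 0 < eps -> exists T, forall t, t >= T -> V t < eps * eps).
  { intros eps He.
    set (eta := a * eps / 4).
    assert (Heta : 0 < eta) by (unfold eta; apply Rdiv_lt_0_compat; [apply Rmult_lt_0_compat|]; lra).
    destruct (HF1 eta Heta) as [T1 H1]. destruct (HF2 eta Heta) as [T2 H2].
    set (T0 := Rmax (Rmax T1 T2) 0).
    assert (HT0 : T1 <= T0 /\ T2 <= T0 /\ 0 <= T0).
    { unfold T0. pose proof (Rmax_l (Rmax T1 T2) 0). pose proof (Rmax_r (Rmax T1 T2) 0).
      pose proof (Rmax_l T1 T2). pose proof (Rmax_r T1 T2). lra. }
    set (c0 := 2 * eta * eta / (a * a)).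
    assert (Hc0 : 0 <= c0) by (unfold c0; apply Rmult_le_pos; [nra| left; apply Rinv_0_lt_compat; nra]).
    assert (Hc0e : c0 = eps * eps / 8) by (unfold c0, eta; field; lra).
    set (dV := fun u => 2 * (u1 u - p) * (al * u1 u - be * u2 u + F1 u) + 2 * (u2 u - q) * (be * u1 u + al * u2 u + F2 u)).
    assert (HdV : forall t, inpiece ts t -> derivable_pt_lim V t (dV t)).
    { intros t Hp. destruct (Hder t Hp) as [D1 D2]. unfold V, dV.
      apply (derivable_pt_lim_plus (fun u => (u1 u - p) * (u1 u - p)) (fun u => (u2 u - q) * (u2 u - q))); apply dsq; assumption. }
    assert (HcV : forall t, continuity_pt V t).
    { intros t. unfold V. apply continuity_pt_plus; apply continuity_pt_mult; apply continuity_pt_minus;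
        try (apply continuity_pt_const; intros x y; reflexivity); auto. }
    assert (HdVb : forall t, T0 < t -> dV t <= - a * (V t - c0)).
    { intros t Ht. specialize (H1 t ltac:(lra)). specialize (H2 t ltac:(lra)).
      apply Rabs_def2 in H1. apply Rabs_def2 in H2.
      set (e1 := u1 t - p). set (e2 := u2 t - q). set (g1 := F1 t - l1). set (g2 := F2 t - l2).
      assert (E : dV t = 2 * al * (e1 * e1 + e2 * e2) + 2 * (e1 * g1 + e2 * g2)).
      { unfold dV, e1, e2, g1, g2. replace (F1 t) with (g1 + l1) by (unfold g1; ring).
        replace (F2 t) with (g2 + l2) by (unfold g2; ring).
        replace l1 with (- (al * p - be * q)) by lra. replace l2 with (- (be * p + al * q)) by lra. unfold g1, g2. ring. }
      assert (B1 : 2 * (e1 * g1) <= a * (e1 * e1) + g1 * g1 / a).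
      { assert (0 <= (a * e1 - g1) * (a * e1 - g1) / a) by (apply Rmult_le_pos; [apply Rle_0_sqr| left; apply Rinv_0_lt_compat; lra]).
        replace ((a * e1 - g1) * (a * e1 - g1) / a) with (a * (e1 * e1) + g1 * g1 / a - 2 * (e1 * g1)) in H by (field; lra). lra. }
      assert (B2 : 2 * (e2 * g2) <= a * (e2 * e2) + g2 * g2 / a).
      { assert (0 <= (a * e2 - g2) * (a * e2 - g2) / a) by (apply Rmult_le_pos; [apply Rle_0_sqr| left; apply Rinv_0_lt_compat; lra]).
        replace ((a * e2 - g2) * (a * e2 - g2) / a) with (a * (e2 * e2) + g2 * g2 / a - 2 * (e2 * g2)) in H by (field; lra). lra. }
      assert (G1 : g1 * g1 <= eta * eta) by (unfold g1; nra).
      assert (G2 : g2 * g2 <= eta * eta) by (unfold g2; nra).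
      assert (G : g1 * g1 / a + g2 * g2 / a <= a * c0).
      { unfold c0. replace (a * (2 * eta * eta / (a * a))) with ((eta * eta + eta * eta) / a) by (field; lra).
        unfold Rdiv. rewrite <- Rmult_plus_distr_r. apply Rmult_le_compat_r; [left; apply Rinv_0_lt_compat; lra| lra]. }
      assert (HVt : V t = e1 * e1 + e2 * e2) by reflexivity.
      rewrite HVt. replace al with (- a) in E by (unfold a; ring). lra. }
    assert (Hmono : forall t, T0 <= t -> exp (a * t) * (V t - c0) <= exp (a * T0) * (V T0 - c0)).
    { intros t Ht.
      assert (H := mono_piece ts tauD (fun u => -1 * (exp (a * u) * (V u - c0)))
          (fun u => -1 * (exp (a * u) * (dV u + a * (V u - c0)))) T0 t Hd ltac:(lra)).
      assert (-1 * (exp (a * T0) * (V T0 - c0)) <= -1 * (exp (a * t) * (V t - c0))); [|lra].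
      apply H; try lra.
      - intros u _. apply continuity_pt_mult; [apply continuity_pt_const; intros x y; reflexivity|].
        apply expw_cont. apply continuity_pt_minus; [apply HcV| apply continuity_pt_const; intros x y; reflexivity].
      - intros u Hp _. apply dlim_scal. apply (expw_deriv a (fun u => V u - c0)).
        replace (dV u) with (dV u - 0) by ring.
        apply (derivable_pt_lim_minus V (fun _ => c0)); [apply HdV; exact Hp| apply derivable_pt_lim_const].
      - intros u Hp Hu. specialize (HdVb u ltac:(lra)).
        assert (0 < exp (a * u)) by apply exp_pos.
        assert (exp (a * u) * (dV u + a * (V u - c0)) <= 0).
        { replace 0 with (exp (a * u) * 0) by ring. apply Rmult_le_compat_l; lra. }
        lra. }
    assert (HV0 : 0 <= V T0) by (unfold V; apply Rplus_le_le_0_compat; apply Rle_0_sqr).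
    set (s := 4 * (V T0 + 1) / (a * (eps * eps))).
    assert (Hs : 0 < s) by (unfold s; apply Rdiv_lt_0_compat; [lra| apply Rmult_lt_0_compat; nra]).
    exists (T0 + s). intros t Ht.
    specialize (Hmono t ltac:(lra)).
    assert (HVt : V t - c0 <= exp (- (a * (t - T0))) * (V T0 - c0)).
    { replace (V t - c0) with (exp (- (a * t)) * (exp (a * t) * (V t - c0))).
      - replace (exp (- (a * (t - T0)))) with (exp (- (a * t)) * exp (a * T0)) by (rewrite <- exp_plus; f_equal; ring).
        rewrite Rmult_assoc. apply Rmult_le_compat_l; [left; apply exp_pos| exact Hmono].
      - rewrite <- Rmult_assoc, <- exp_plus. replace (- (a * t) + a * t) with 0 by ring. rewrite exp_0; ring. }
    assert (Hex : exp (- (a * (t - T0))) <= exp (- (a * s))).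
    { apply exp_le. assert (a * s <= a * (t - T0)) by (apply Rmult_le_compat_l; lra). lra. }
    pose proof (exp_neg_bound a s Ha Hs) as Hb.
    assert (Has : a * s = 4 * (V T0 + 1) / (eps * eps)) by (unfold s; field; split; lra || nra).
    assert (Hfrac : (V T0) * (1 / (1 + a * s)) < eps * eps / 4).
    { rewrite Has. assert (0 < eps * eps) by nra.
      replace (V T0 * (1 / (1 + 4 * (V T0 + 1) / (eps * eps)))) with (V T0 * (eps * eps) / (eps * eps + 4 * (V T0 + 1)))
        by (field; split; nra).
      apply Rmult_lt_reg_r with (eps * eps + 4 * (V T0 + 1)); [nra|].
      unfold Rdiv. rewrite Rmult_assoc, Rinv_l by nra. nra. }
    assert (Hexp0 : 0 <= exp (- (a * (t - T0)))) by (left; apply exp_pos).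
    assert (exp (- (a * (t - T0))) * (V T0 - c0) <= exp (- (a * (t - T0))) * V T0) by (apply Rmult_le_compat_l; lra).
    assert (exp (- (a * (t - T0))) * V T0 <= (1 / (1 + a * s)) * V T0) by (apply Rmult_le_compat_r; lra).
    assert (0 < eps * eps) by nra.
    lra. }
  exists p, q. split.
  - intros eps He. destruct (Main eps He) as [T HT]. exists T. intros t Ht. specialize (HT t Ht).
    unfold V in HT. assert ((u1 t - p) * (u1 t - p) < eps * eps) by (pose proof (Rle_0_sqr (u2 t - q)); unfold Rsqr in *; lra).
    destruct (Rcase_abs (u1 t - p)) as [Hl|Hl]; [rewrite Rabs_left by lra| rewrite Rabs_right by lra]; nra.
  - intros eps He. destruct (Main eps He) as [T HT]. exists T. intros t Ht. specialize (HT t Ht).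
    unfold V in HT. assert ((u2 t - q) * (u2 t - q) < eps * eps) by (pose proof (Rle_0_sqr (u1 t - p)); unfold Rsqr in *; lra).
    destruct (Rcase_abs (u2 t - q)) as [Hl|Hl]; [rewrite Rabs_left by lra| rewrite Rabs_right by lra]; nra.
Qed.

Lemma cf_zero lam k j : (k < j)%nat -> cf lam k j = (0, 0).
Proof.
  revert j. induction k; intros j Hj; simpl.
  - destruct j; [lia| reflexivity].
  - destruct j as [|j]; [lia|]. rewrite (IHk j) by lia. rewrite (IHk (S j)) by lia.
    unfold cadd, cmul, copp; simpl; f_equal; ring.
Qed.

Lemma cf_diag lam k : cf lam k k = (1, 0).
Proof.
  induction k; simpl; [reflexivity|]. rewrite IHk, cf_zero by lia.
  unfold cadd, cmul, copp; simpl; f_equal; ring.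
Qed.

Lemma csum_cadd n f g : csum n (fun j => cadd (f j) (g j)) = cadd (csum n f) (csum n g).
Proof. induction n; simpl; [unfold cadd; simpl; f_equal; ring|]. rewrite IHn.
  destruct (csum n f), (csum n g), (f n), (g n); unfold cadd; simpl; f_equal; ring. Qed.
Lemma csum_cmul n c f : csum n (fun j => cmul c (f j)) = cmul c (csum n f).
Proof. induction n; simpl; [destruct c; unfold cmul; simpl; f_equal; ring|]. rewrite IHn.
  destruct c, (csum n f), (f n); unfold cadd, cmul; simpl; f_equal; ring. Qed.

Lemma U_rec lam (Y : nat -> R * R) k :
  csum (S (S k)) (fun j => cmul (cf lam (S k) j) (Y j)) =
  cadd (csum (S k) (fun j => cmul (cf lam k j) (Y (S j))))
       (cmul (copp (lam k)) (csum (S k) (fun j => cmul (cf lam k j) (Y j)))).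
Proof.
  assert (E1 : csum (S (S k)) (fun j => cmul (cf lam (S k) j) (Y j)) =
     cadd (csum (S (S k)) (fun j => cmul (match j with O => (0,0) | S j' => cf lam k j' end) (Y j)))
          (csum (S (S k)) (fun j => cmul (copp (lam k)) (cmul (cf lam k j) (Y j))))).
  { rewrite <- csum_cadd. apply csum_ext. intros j _. cbn [cf].
    destruct (match j with O => (0,0) | S j' => cf lam k j' end), (lam k), (cf lam k j), (Y j).
    unfold cadd, cmul, copp; simpl; f_equal; ring. }
  rewrite E1. f_equal.
  - rewrite <- csum_shift. cbn beta iota. replace (cmul (0, 0) (Y O)) with ((0:R), (0:R)) by (destruct (Y O); unfold cmul; simpl; f_equal; ring).
    destruct (csum (S k) (fun j => cmul (cf lam k j) (Y (S j)))); unfold cadd; simpl; f_equal; ring.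
  - rewrite csum_cmul. f_equal.
    change (csum (S (S k)) ?f) with (cadd (csum (S k) f) (f (S k))). cbv beta.
    rewrite (cf_zero lam k (S k)) by lia.
    destruct (csum (S k) (fun j => cmul (cf lam k j) (Y j))), (Y (S k)); unfold cadd, cmul; simpl; f_equal; ring.
Qed.

Lemma csum_deriv n (c : nat -> R * R) (Y Y' : nat -> R -> R * R) t :
  (forall j, (j < n)%nat -> derivable_pt_lim (fun s => fst (Y j s)) t (fst (Y' j t)) /\
                            derivable_pt_lim (fun s => snd (Y j s)) t (snd (Y' j t))) ->
  derivable_pt_lim (fun s => fst (csum n (fun j => cmul (c j) (Y j s)))) t (fst (csum n (fun j => cmul (c j) (Y' j t)))) /\
  derivable_pt_lim (fun s => snd (csum n (fun j => cmul (c j) (Y j s)))) t (snd (csum n (fun j => cmul (c j) (Y' j t)))).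
Proof.
  induction n; intros H; simpl.
  - split; apply derivable_pt_lim_const.
  - destruct IHn as [I1 I2]; [intros; apply H; lia|]. destruct (H n ltac:(lia)) as [D1 D2].
    unfold cadd, cmul; simpl. split.
    + apply (derivable_pt_lim_plus (fun s => fst (csum n (fun j => cmul (c j) (Y j s))))); [exact I1|].
      apply (derivable_pt_lim_minus (fun s => fst (c n) * fst (Y n s)) (fun s => snd (c n) * snd (Y n s))); apply dlim_scal; assumption.
    + apply (derivable_pt_lim_plus (fun s => snd (csum n (fun j => cmul (c j) (Y j s))))); [exact I2|].
      apply (derivable_pt_lim_plus (fun s => fst (c n) * snd (Y n s)) (fun s => snd (c n) * fst (Y n s))).
      * apply dlim_scal; assumption.
      * apply dlim_scal; assumption.
Qed.

Lemma csum_cont n (c : nat -> R * R) (Y : nat -> R -> R * R) t :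
  (forall j, (j < n)%nat -> continuity_pt (fun s => fst (Y j s)) t /\ continuity_pt (fun s => snd (Y j s)) t) ->
  continuity_pt (fun s => fst (csum n (fun j => cmul (c j) (Y j s)))) t /\
  continuity_pt (fun s => snd (csum n (fun j => cmul (c j) (Y j s)))) t.
Proof.
  induction n; intros H; simpl.
  - split; apply continuity_pt_const; intros x y; reflexivity.
  - destruct IHn as [I1 I2]; [intros; apply H; lia|]. destruct (H n ltac:(lia)) as [D1 D2].
    unfold cadd, cmul; simpl.
    assert (Hk : forall r (f : R -> R), continuity_pt f t -> continuity_pt (fun s => r * f s) t).
    { intros r f Hf. apply continuity_pt_mult; [apply continuity_pt_const; intros x y; reflexivity| exact Hf]. }
    split.
    + apply (continuity_pt_plus (fun s => fst (csum n (fun j => cmul (c j) (Y j s))))); [exact I1|].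
      apply (continuity_pt_minus (fun s => fst (c n) * fst (Y n s)) (fun s => snd (c n) * snd (Y n s))); apply Hk; assumption.
    + apply (continuity_pt_plus (fun s => snd (csum n (fun j => cmul (c j) (Y j s))))); [exact I2|].
      apply (continuity_pt_plus (fun s => fst (c n) * snd (Y n s)) (fun s => snd (c n) * fst (Y n s))); apply Hk; assumption.
Qed.

Lemma csum_cv n (c : nat -> R * R) (Y : nat -> R -> R * R) (L : nat -> R * R) :
  (forall j, (j < n)%nat -> cv_infty_to (fun s => fst (Y j s)) (fst (L j)) /\ cv_infty_to (fun s => snd (Y j s)) (snd (L j))) ->
  cv_infty_to (fun s => fst (csum n (fun j => cmul (c j) (Y j s)))) (fst (csum n (fun j => cmul (c j) (L j)))) /\
  cv_infty_to (fun s => snd (csum n (fun j => cmul (c j) (Y j s)))) (snd (csum n (fun j => cmul (c j) (L j)))).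
Proof.
  induction n; intros H; simpl.
  - split; apply cv_const.
  - destruct IHn as [I1 I2]; [intros; apply H; lia|]. destruct (H n ltac:(lia)) as [D1 D2].
    unfold cadd, cmul; simpl. split.
    + apply cv_plus; [exact I1|]. unfold Rminus.
      apply cv_plus; [apply cv_scal; exact D1|].
      apply cv_eq with (-1 * (snd (c n) * snd (L n))); [|ring].
      apply (cv_ext (fun s => -1 * (snd (c n) * snd (Y n s)))); [intros; ring|]. apply cv_scal, cv_scal; exact D2.
    + apply cv_plus; [exact I2|]. apply cv_plus; apply cv_scal; assumption.
Qed.

Definition Usig (lam : nat -> R * R) (X : nat -> R -> R) (k : nat) (t : R) : R * R :=
  csum (S k) (fun j => cmul (cf lam k j) (X j t, 0)).

Lemma chain_conv ts tauD d lam (X : nat -> R -> R) :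
  dw ts tauD -> (forall j, (j < d)%nat -> fst (lam j) < 0) ->
  (forall c t, (c <= d)%nat -> continuity_pt (X c) t) ->
  (forall c t, (c < d)%nat -> inpiece ts t -> derivable_pt_lim (X c) t (X (S c) t)) ->
  (exists Ld, cv_infty_to (fun t => fst (Usig lam X d t)) (fst Ld) /\ cv_infty_to (fun t => snd (Usig lam X d t)) (snd Ld)) ->
  forall c, (c <= d)%nat -> exists L, cv_infty_to (X c) L.
Proof.
  intros Hd Hlam Hc Hder HUd.
  assert (HU : forall r k, (k + r = d)%nat -> exists Lk,
     cv_infty_to (fun t => fst (Usig lam X k t)) (fst Lk) /\ cv_infty_to (fun t => snd (Usig lam X k t)) (snd Lk)).
  { induction r; intros k Hk.
    - replace k with d by lia. exact HUd.
    - destruct (IHr (S k) ltac:(lia)) as [L1 [HL1 HL2]].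
      assert (Hcont : forall k' t, (k' <= d)%nat -> continuity_pt (fun s => fst (Usig lam X k' s)) t /\
                                                  continuity_pt (fun s => snd (Usig lam X k' s)) t).
      { intros k' t Hk'. unfold Usig. apply (csum_cont (S k') (cf lam k') (fun j s => (X j s, 0))).
        intros j Hj. simpl. split; [apply Hc; lia| apply continuity_pt_const; intros x y; reflexivity]. }
      destruct (fo_real ts tauD (fun t => fst (Usig lam X k t)) (fun t => snd (Usig lam X k t))
        (fun t => fst (Usig lam X (S k) t)) (fun t => snd (Usig lam X (S k) t))
        (fst (lam k)) (snd (lam k)) (fst L1) (snd L1) Hd (Hlam k ltac:(lia))) as [p [q [Hp Hq]]].
      + intros t. apply (Hcont k t). lia.
      + intros t. apply (Hcont k t). lia.
      + intros t Hpc.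
        destruct (csum_deriv (S k) (cf lam k) (fun j s => (X j s, 0)) (fun j s => (X (S j) s, 0)) t) as [D1 D2].
        { intros j Hj. simpl. split; [apply Hder; [lia| exact Hpc]| apply derivable_pt_lim_const]. }
        set (DU := csum (S k) (fun j => cmul (cf lam k j) (X (S j) t, 0))) in *.
        assert (E : Usig lam X (S k) t = cadd DU (cmul (copp (lam k)) (Usig lam X k t)))
          by exact (U_rec lam (fun j => (X j t, 0)) k).
        change (derivable_pt_lim (fun s => fst (Usig lam X k s)) t (fst DU)) in D1.
        change (derivable_pt_lim (fun s => snd (Usig lam X k s)) t (snd DU)) in D2.
        rewrite E.
        assert (V1 : fst (lam k) * fst (Usig lam X k t) - snd (lam k) * snd (Usig lam X k t) + fst (cadd DU (cmul (copp (lam k)) (Usig lam X k t))) = fst DU)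
          by (destruct DU, (Usig lam X k t), (lam k); unfold cadd, cmul, copp; simpl; ring).
        assert (V2 : snd (lam k) * fst (Usig lam X k t) + fst (lam k) * snd (Usig lam X k t) + snd (cadd DU (cmul (copp (lam k)) (Usig lam X k t))) = snd DU)
          by (destruct DU, (Usig lam X k t), (lam k); unfold cadd, cmul, copp; simpl; ring).
        rewrite V1, V2. split; assumption.
      + exact HL1.
      + exact HL2.
      + exists (p, q). split; assumption. }
  assert (HX : forall c, (c <= d)%nat -> exists Lf : nat -> R, forall j, (j <= c)%nat -> cv_infty_to (X j) (Lf j)).
  { induction c; intros Hcd.
    - destruct (HU d O ltac:(lia)) as [L0 [H0 _]].
      exists (fun _ => fst L0). intros j Hj. replace j with O by lia.
      apply (cv_ext (fun t => fst (Usig lam X 0 t))); [|exact H0].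
      intros t. unfold Usig; simpl. unfold cadd, cmul; simpl. ring.
    - destruct (IHc ltac:(lia)) as [Lf HLf].
      destruct (HU (d - S c)%nat (S c) ltac:(lia)) as [Lc [H1 _]].
      destruct (csum_cv (S c) (cf lam (S c)) (fun j s => (X j s, 0)) (fun j => (Lf j, 0))) as [C1 _].
      { intros j Hj. simpl. split; [apply HLf; lia| apply cv_const]. }
      set (Lnew := fst Lc - fst (csum (S c) (fun j => cmul (cf lam (S c) j) (Lf j, 0)))).
      exists (fun j => if Nat.leb j c then Lf j else Lnew). intros j Hj.
      destruct (Nat.leb_spec j c) as [Hjc|Hjc]; [apply HLf; exact Hjc|].
      replace j with (S c) by lia.
      apply (cv_ext (fun t => fst (Usig lam X (S c) t) + -1 * fst (csum (S c) (fun j => cmul (cf lam (S c) j) (X j t, 0))))).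
      + intros t. unfold Usig. change (csum (S (S c)) ?f) with (cadd (csum (S c) f) (f (S c))). cbv beta.
        rewrite cf_diag. unfold cadd, cmul; simpl. ring.
      + apply cv_eq with (fst Lc + -1 * fst (csum (S c) (fun j => cmul (cf lam (S c) j) (Lf j, 0)))).
        * apply cv_plus; [exact H1| apply cv_scal; exact C1].
        * unfold Lnew; ring. }
  intros c Hc'. destruct (HX c Hc') as [Lf H]. exists (Lf c). apply H; lia.
Qed.

Lemma rsum_shift n f : rsum (S n) f = f O + rsum n (fun c => f (S c)).
Proof. induction n; simpl in *; [ring|]. rewrite IHn. ring. Qed.

Lemma rsum_cv0 n (F : nat -> R -> R) : (forall c, (c < n)%nat -> cv_infty_to (F c) 0) ->
  cv_infty_to (fun t => rsum n (fun c => F c t)) 0.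
Proof.
  induction n; intros H; simpl.
  - apply cv_const.
  - apply cv_eq with (0 + 0); [|ring]. apply cv_plus; [apply IHn; intros; apply H; lia| apply H; lia].
Qed.

Lemma csum_real n (r y : nat -> R) :
  csum n (fun j => cmul (r j, 0) (y j, 0)) = (rsum n (fun j => r j * y j), 0).
Proof. induction n; simpl; [reflexivity|]. rewrite IHn. unfold cadd, cmul; simpl; f_equal; ring. Qed.

Lemma minpos_nest n (g : nat -> R -> Prop) :
  (forall k, (k < n)%nat -> exists d, 0 < d /\ g k d) ->
  (forall k d d', g k d -> 0 < d' -> d' <= d -> g k d') ->
  exists d, 0 < d /\ forall k, (k < n)%nat -> g k d.
Proof.
  intros H Hm. induction n.
  - exists 1; split; [lra| intros; lia].
  - destruct IHn as [d1 [Hd1 H1]]; [intros; apply H; lia|].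
    destruct (H n ltac:(lia)) as [d2 [Hd2 H2]].
    exists (Rmin d1 d2). split; [apply Rmin_glb_lt; lra|]. intros k Hk.
    destruct (Nat.eq_dec k n) as [->|Hne].
    + apply (Hm n d2); [exact H2| apply Rmin_glb_lt; lra| apply Rmin_r].
    + apply (Hm k d1); [apply H1; lia| apply Rmin_glb_lt; lra| apply Rmin_l].
Qed.

Lemma minpos1 n (f : nat -> R) : exists d, 0 < d /\ forall k, (k < n)%nat -> 0 < f k -> d <= f k.
Proof.
  apply (minpos_nest n (fun k d => 0 < f k -> d <= f k)).
  - intros k _. destruct (Rlt_dec 0 (f k)) as [Hp|Hp].
    + exists (f k); split; [exact Hp| intros; lra].
    + exists 1; split; [lra| intros; lra].
  - intros k d d' H Hd' Hle Hf. specialize (H Hf). lra.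
Qed.

Lemma cpow0 i : cpow (0, 0) (S i) = (0, 0).
Proof. simpl. destruct (cpow (0,0) i). unfold cmul; simpl; f_equal; ring. Qed.

Lemma charpoly_at0 d a : (1 <= d)%nat -> charpoly (S d) a (0, 0) = (a 1%nat, 0).
Proof.
  intros Hd. rewrite charpoly_csum. destruct d as [|d]; [lia|].
  rewrite cpow0. rewrite <- csum_shift. simpl cpow.
  rewrite (csum_ext d _ (fun _ => (0, 0))).
  - assert (Hz : forall n, csum n (fun _ => (0:R, 0:R)) = (0, 0)).
    { induction n; simpl; [reflexivity|]. rewrite IHn. unfold cadd; simpl; f_equal; ring. }
    rewrite Hz. unfold cadd, cmul, cofr; simpl; f_equal; ring.
  - intros i _. cbv beta. destruct (cpow (0,0) i). unfold cmul, cofr; simpl; f_equal; ring.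
Qed.

Lemma z_deriv_eq N d a alpha sigma (x : nat -> R -> nat -> R) i t :
  rsum (S d) (fun c => K2 (S d) a c *
     (if Nat.eqb c (S d - 1) then protocol N (S d) a alpha sigma x i t else x i t (S c)))
  = rsum N (fun j => alpha (sigma t) i j *
       (rsum (S d) (fun c => K2 (S d) a c * x j t c) - rsum (S d) (fun c => K2 (S d) a c * x i t c))).
Proof.
  replace (S d - 1)%nat with d by lia.
  change (rsum (S d) ?f) with (rsum d f + f d) at 1. cbv beta.
  rewrite Nat.eqb_refl.
  rewrite (rsum_ext d _ (fun c => a (S c) * x i t (S c))).
  2:{ intros c Hc. assert (Nat.eqb c d = false) by (apply Nat.eqb_neq; lia). rewrite H.
      unfold K2. replace (S d - 1)%nat with d by lia. rewrite H. reflexivity. }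
  unfold K2 at 1. replace (S d - 1)%nat with d by lia. rewrite Nat.eqb_refl.
  unfold protocol. rewrite rsum_shift. unfold K1 at 1.
  rewrite (rsum_ext d (fun c => K1 a (S c) * x i t (S c)) (fun c => - (a (S c) * x i t (S c)))) by (intros; unfold K1; ring).
  rewrite rsum_opp.
  rewrite (rsum_ext N (fun j => alpha (sigma t) i j * rsum (S d) (fun c => K2 (S d) a c * (x i t c - x j t c)))
     (fun j => - (alpha (sigma t) i j * (rsum (S d) (fun c => K2 (S d) a c * x j t c) - rsum (S d) (fun c => K2 (S d) a c * x i t c))))).
  - rewrite rsum_opp. ring.
  - intros j _. rewrite (rsum_ext (S d) (fun c => K2 (S d) a c * (x i t c - x j t c))
        (fun c => K2 (S d) a c * x i t c + (-1) * (K2 (S d) a c * x j t c))) by (intros; ring).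
    rewrite rsum_plus, rsum_scal. ring.
Qed.

Theorem theorem1
  (N m : nat) (hN : (1 <= N)%nat) (hm : (2 <= m)%nat)
  (a : nat -> R)
  (nS : nat) (alpha : nat -> nat -> nat -> R)
  (halpha_nonneg : forall k i j, (k < nS)%nat -> 0 <= alpha k i j)
  (halpha_noself : forall k i, (k < nS)%nat -> alpha k i i = 0)
  (sigma : R -> nat) (hsigma : forall t, (sigma t < nS)%nat)
  (ts : nat -> R) (tauD : R) (hdwell : dwell_switching sigma ts tauD)
  (hhur : hurwitz m a)
  (hconn : ujqsc N alpha sigma)
  (x : nat -> R -> nat -> R)
  (hcont : forall i c t, (i < N)%nat -> (c < m)%nat ->
           continuity_pt (fun s => x i s c) t)
  (hode : forall n i c t, (i < N)%nat -> (c < m)%nat -> ts n < t < ts (S n) ->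
           derivable_pt_lim (fun s => x i s c) t
             (if Nat.eqb c (m - 1) then protocol N m a alpha sigma x i t
              else x i t (S c))) :
  exists xbar : R, forall i c, (i < N)%nat -> (c < m)%nat ->
    cv_infty_to (fun t => x i t c) (if Nat.eqb c 0 then xbar / a 1%nat else 0).
Proof.
  destruct hdwell as [HtauD [Hts0 [Hstep Hconst]]].
  assert (Hd : dw ts tauD) by (split; [exact HtauD| split; assumption]).
  set (w := fun t i j => alpha (sigma t) i j).
  set (W := rsum nS (fun k => rsum N (fun i => rsum N (fun j => alpha k i j)))).
  assert (Hw : wbound N w W).
  { intros t i j Hi Hj. unfold w. pose proof (hsigma t) as Hk. split; [apply halpha_nonneg; exact Hk|].
    set (k := sigma t) in *.
    apply Rle_trans with (rsum N (fun j => alpha k i j)).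
    { apply (rsum_ge_term N (fun j => alpha k i j)); [intros; apply halpha_nonneg; exact Hk| exact Hj]. }
    apply Rle_trans with (rsum N (fun i => rsum N (fun j => alpha k i j))).
    { apply (rsum_ge_term N (fun i => rsum N (fun j => alpha k i j))); [|exact Hi].
      intros; apply rsum_nonneg; intros; apply halpha_nonneg; exact Hk. }
    apply (rsum_ge_term nS (fun k => rsum N (fun i => rsum N (fun j => alpha k i j)))); [|exact Hk].
    intros k' Hk'. apply rsum_nonneg; intros; apply rsum_nonneg; intros; apply halpha_nonneg; exact Hk'. }
  destruct (minpos_nest nS (fun k d => forall i j, (i < N)%nat -> (j < N)%nat -> 0 < alpha k i j -> d <= alpha k i j))
    as [delta [Hdel Hdk]].
  { intros k Hk.
    destruct (minpos_nest N (fun i d => forall j, (j < N)%nat -> 0 < alpha k i j -> d <= alpha k i j)) as [d0 [Hd0 H0]].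
    - intros i Hi. destruct (minpos1 N (fun j => alpha k i j)) as [d1 [Hd1 H1]]. exists d1. split; [exact Hd1| exact H1].
    - intros i d1 d2 H Hd2 Hle j Hj Hp. specialize (H j Hj Hp). lra.
    - exists d0. split; [exact Hd0|]. intros i j Hi Hj Hp. apply H0; assumption. }
  { intros k d1 d2 H Hd2 Hle i j Hi Hj Hp. specialize (H i j Hi Hj Hp). lra. }
  assert (Hlow : wlow N w delta).
  { intros t i j Hi Hj Hp. apply (Hdk (sigma t) (hsigma t)); assumption. }
  assert (Hact : wact w (tauD / 2)).
  { intros s Hs. destruct (dw_find ts tauD Hd s Hs) as [n Hn].
    destruct (Rle_dec (tauD / 2) (s - ts n)) as [Hle|Hgt].
    - exists (s - tauD / 2). split; [lra|]. intros u i j Hu. unfold w.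
      rewrite (Hconst n u) by lra. rewrite (Hconst n s) by lra. reflexivity.
    - exists s. split; [lra|]. intros u i j Hu. unfold w. specialize (Hstep n).
      rewrite (Hconst n u) by lra. rewrite (Hconst n s) by lra. reflexivity. }
  destruct hconn as [T [HT Hc]].
  set (z := fun i t => rsum m (fun c => K2 m a c * x i t c)).
  destruct m as [|d]; [lia|].
  assert (Hd1 : (1 <= d)%nat) by lia.
  assert (Hz : cons_dyn ts N w z).
  { split.
    - intros i t Hi. unfold z. apply (rsum_cont (S d) (fun c s => K2 (S d) a c * x i s c)).
      intros c Hc'. apply continuity_pt_mult; [apply continuity_pt_const; intros p q; reflexivity| apply hcont; assumption].
    - intros i t Hi [n Hn]. unfold z, w.
      rewrite <- (z_deriv_eq N d a alpha sigma x i t).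
      apply (rsum_deriv (S d) (fun c s => K2 (S d) a c * x i s c) (fun c s => K2 (S d) a c * (if Nat.eqb c (S d - 1) then protocol N (S d) a alpha sigma x i s else x i s (S c))) t).
      intros c Hc'. apply dlim_scal. apply (hode n); assumption. }
  destruct (consensus_conv ts tauD N w W delta (tauD / 2) T z Hd hN Hw Hlow Hdel Hact ltac:(lra) HT) as [zs Hzs].
  { intros t Ht. exact (Hc t ltac:(lra)). }
  { exact Hz. }
  destruct (Bridge.bridge d a) as [lam [Hroot Hcf]].
  assert (Hlam : forall j, (j < d)%nat -> fst (lam j) < 0) by (intros j Hj; apply hhur; apply Hroot; exact Hj).
  assert (Ha1 : a 1%nat <> 0).
  { intros E. pose proof (hhur (0, 0)) as H. rewrite charpoly_at0 in H by exact Hd1. rewrite E in H.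
    specialize (H eq_refl). simpl in H. lra. }
  exists zs. intros i c Hi Hc'.
  set (X := fun c t => x i t c).
  assert (HX := chain_conv ts tauD d lam X Hd Hlam).
  assert (HX' : forall c, (c <= d)%nat -> exists L, cv_infty_to (X c) L).
  { apply HX.
    - intros c0 t Hc0. apply hcont; [exact Hi| lia].
    - intros c0 t Hc0 [n Hn]. pose proof (hode n i c0 t Hi ltac:(lia) Hn) as H.
      replace (Nat.eqb c0 (S d - 1)) with false in H by (symmetry; apply Nat.eqb_neq; lia). exact H.
    - exists (zs, 0). split.
      + apply (cv_ext (z i)); [|exact (Hzs i Hi)].
        intros t. unfold Usig. rewrite (csum_ext (S d) _ (fun j => cmul (K2 (S d) a j, 0) (X j t, 0))).
        * rewrite csum_real. reflexivity.
        * intros j Hj. rewrite Hcf by lia. unfold K2. replace (S d - 1)%nat with d by lia. destruct (Nat.eqb j d); reflexivity.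
      + apply (cv_ext (fun _ => 0)); [|apply cv_const].
        intros t. unfold Usig. rewrite (csum_ext (S d) _ (fun j => cmul (K2 (S d) a j, 0) (X j t, 0))).
        * rewrite csum_real. reflexivity.
        * intros j Hj. rewrite Hcf by lia. unfold K2. replace (S d - 1)%nat with d by lia. destruct (Nat.eqb j d); reflexivity. }
  assert (Hzero : forall c, (1 <= c)%nat -> (c <= d)%nat -> cv_infty_to (X c) 0).
  { intros c0 H1 H2. destruct (HX' c0 H2) as [L HL]. destruct (HX' (c0 - 1)%nat ltac:(lia)) as [L' HL'].
    assert (L = 0); [|subst; exact HL].
    apply (deriv_lim_zero ts tauD (X (c0 - 1)%nat) (X c0) L' L Hd).
    - intros t. apply hcont; [exact Hi| lia].
    - intros t [n Hn]. pose proof (hode n i (c0 - 1)%nat t Hi ltac:(lia) Hn) as H.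
      replace (Nat.eqb (c0 - 1) (S d - 1)) with false in H by (symmetry; apply Nat.eqb_neq; lia).
      replace (S (c0 - 1)) with c0 in H by lia. exact H.
    - exact HL'.
    - exact HL. }
  destruct (HX' O ltac:(lia)) as [L0 HL0].
  assert (HzL : cv_infty_to (z i) (a 1%nat * L0)).
  { apply (cv_ext (fun t => K2 (S d) a O * X O t + rsum d (fun c => K2 (S d) a (S c) * X (S c) t))).
    - intros t. unfold z. rewrite rsum_shift. reflexivity.
    - apply cv_eq with (K2 (S d) a O * L0 + 0).
      + apply cv_plus; [apply cv_scal; exact HL0|].
        apply (rsum_cv0 d (fun c t => K2 (S d) a (S c) * X (S c) t)). intros c0 Hc0.
        apply cv_eq with (K2 (S d) a (S c0) * 0); [|ring]. apply cv_scal. apply Hzero; lia.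
      + unfold K2. replace (S d - 1)%nat with d by lia.
        replace (Nat.eqb 0 d) with false by (symmetry; apply Nat.eqb_neq; lia). ring. }
  assert (Hzs' : zs = a 1%nat * L0) by (apply (cv_unique (z i)); [exact (Hzs i Hi)| exact HzL]).
  destruct c as [|c].
  - simpl. apply cv_eq with L0; [exact HL0|]. rewrite Hzs'. field. exact Ha1.
  - simpl. apply (Hzero (S c)); lia.
Qed.
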